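(* Let $|q|<1$ and let $(\alpha_n,\beta_n)$ be a Bailey pair with respect to $a$. Assume $|qa|<|z|$, no denominator vanishes, and all series converge absolutely. Then $$\sum_{n=1}^{\infty} (z;q)_{n}(q;q)_{n-1}\left( \frac{q a}{ z }\right )^{n} \beta_n - \sum_{n=1}^{\infty}\frac{(z;q)_{n}(q;q)_{n-1}}{(q a ,q a/z;q)_n}\left (\frac{q a}{z}\right)^{n}\alpha_n=f_1(a,z,q),$$ where $f_1(a,z,q)$ is given by each of the following (equal) expressions: $$f_1(a,z,q)=-\sum_{n=1}^{\infty} \frac{(q\sqrt{a},-q\sqrt{a},a,z;q)_{n}\,q^{n(n+1)/2}}{(\sqrt{a},-\sqrt{a},q a,qa/z;q)_{n}(1-q^n)}\left( \frac{- a}{ z }\right )^{n} =\sum_{n=1}^{\infty} \frac{(z;q)_{n}}{(q a;q)_{n}(1-q^n)}\left( \frac{q a}{ z }\right )^{n} =\sum_{n=1}^{\infty}\frac{a q^n/z}{1-a q^n/z}-\sum_{n=1}^{\infty}\frac{a q^n}{1-aq^n}.$$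
   Context: Notation: $(x;q)_n=(1-x)(1-xq)\cdots(1-xq^{n-1})$, $(x;q)_0=1$, $(x_1,\dots,x_m;q)_n=(x_1;q)_n\cdots(x_m;q)_n$. A Bailey pair with respect to $a$ (base $q$) is a pair of sequences $(\alpha_n,\beta_n)_{n\ge0}$ with $\alpha_0=\beta_0=1$ and, for $n>0$, $\beta_n=\sum_{j=0}^{n}\frac{\alpha_j}{(q;q)_{n-j}(aq;q)_{n+j}}$. *)

(* Defs.v *)
From Stdlib Require Import Reals.
Open Scope R_scope.

Record Cplx : Type := mkC { Re : R; Im : R }.

Definition RtoC (x : R) : Cplx := mkC x 0.
Definition Czero : Cplx := RtoC 0.
Definition Cone : Cplx := RtoC 1.
Definition Cadd (x y : Cplx) : Cplx := mkC (Re x + Re y) (Im x + Im y).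
Definition Copp (x : Cplx) : Cplx := mkC (- Re x) (- Im x).
Definition Csub (x y : Cplx) : Cplx := Cadd x (Copp y).
Definition Cmul (x y : Cplx) : Cplx :=
  mkC (Re x * Re y - Im x * Im y) (Re x * Im y + Im x * Re y).
Definition Cinv (x : Cplx) : Cplx :=
  let d := Re x * Re x + Im x * Im x in mkC (Re x / d) (- Im x / d).
Definition Cdiv (x y : Cplx) : Cplx := Cmul x (Cinv y).
Fixpoint Cpow (x : Cplx) (n : nat) : Cplx :=
  match n with O => Cone | S k => Cmul (Cpow x k) x end.
Definition Cmod (x : Cplx) : R := sqrt (Re x * Re x + Im x * Im x).

Declare Scope C_scope.
Delimit Scope C_scope with C.
Infix "+" := Cadd : C_scope.
Infix "-" := Csub : C_scope.
Infix "*" := Cmul : C_scope.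
Infix "/" := Cdiv : C_scope.
Notation "- x" := (Copp x) : C_scope.
Infix "^" := Cpow : C_scope.

Fixpoint qpoch (x q : Cplx) (n : nat) : Cplx :=
  match n with
  | O => Cone
  | S k => (qpoch x q k * (Cone - x * q ^ k))%C
  end.

Fixpoint Cpsum (f : nat -> Cplx) (N : nat) : Cplx :=
  match N with O => Czero | S k => (Cpsum f k + f k)%C end.

Definition Cseries_sum (f : nat -> Cplx) (s : Cplx) : Prop :=
  Un_cv (fun N => Re (Cpsum f N)) (Re s) /\ Un_cv (fun N => Im (Cpsum f N)) (Im s).

Definition Cabs_conv (f : nat -> Cplx) : Prop :=
  exists l : R, Un_cv (fun N => sum_f_R0 (fun n => Cmod (f n)) N) l.

Definition Csum_0_n (f : nat -> Cplx) (n : nat) : Cplx := Cpsum f (S n).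

Definition bailey_pair (a q : Cplx) (alpha beta : nat -> Cplx) : Prop :=
  alpha 0%nat = Cone /\ beta 0%nat = Cone /\
  forall n : nat, (0 < n)%nat ->
    beta n = Csum_0_n (fun j =>
       (alpha j / (qpoch q q (n - j) * qpoch (a * q) q (n + j)))%C) n.

(* Main.v *)
From Stdlib Require Import Reals Lra Lia Classical FunctionalExtensionality.
From Coquelicot Require Import Coquelicot.
Open Scope R_scope.

Fixpoint qp (x q : C) (n : nat) : C :=
  match n with O => RtoC 1 | S k => (qp x q k * (1 - x * q ^ k))%C end.
Fixpoint ps (f : nat -> C) (N : nat) : C :=
  match N with O => RtoC 0 | S k => (ps f k + f k)%C end.
Fixpoint rps (f : nat -> R) (N : nat) : R :=
  match N with O => 0 | S k => rps f k + f k end.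
Definition cv (u : nat -> C) (l : C) : Prop :=
  forall eps, 0 < eps -> exists N, forall n, (N <= n)%nat -> Cmod (u n - l) < eps.

Lemma Cmod_sub_sym x y : Cmod (x - y) = Cmod (y - x).
Proof. replace (x - y)%C with (- (y - x))%C by ring. apply Cmod_opp. Qed.

Lemma Cmod_tri3 x y z : Cmod (x - z) <= Cmod (x - y) + Cmod (y - z).
Proof. replace (x - z)%C with ((x - y) + (y - z))%C by ring. apply Cmod_triangle. Qed.

Lemma cv_unique u l1 l2 : cv u l1 -> cv u l2 -> l1 = l2.
Proof.
  intros H1 H2. destruct (Ceq_dec l1 l2) as [|Hne]; auto.
  set (e := Cmod (l1 - l2)). assert (He : 0 < e).
  { apply Cmod_gt_0. intro H. apply Hne. replace l1 with ((l1 - l2) + l2)%C by ring. rewrite H. ring. }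
  destruct (H1 (e/2)) as [N1 HN1]; [lra|]. destruct (H2 (e/2)) as [N2 HN2]; [lra|].
  specialize (HN1 (max N1 N2) (Nat.le_max_l _ _)). specialize (HN2 (max N1 N2) (Nat.le_max_r _ _)).
  pose proof (Cmod_tri3 l1 (u (max N1 N2)) l2). rewrite (Cmod_sub_sym l1 (u _)) in H. unfold e in *. exfalso. lra.
Qed.

Lemma cv_plus u v l m : cv u l -> cv v m -> cv (fun n => u n + v n)%C (l + m)%C.
Proof.
  intros Hu Hv eps He. destruct (Hu (eps/2)) as [N1 H1]; [lra|]. destruct (Hv (eps/2)) as [N2 H2]; [lra|].
  exists (max N1 N2). intros n Hn. pose proof (Nat.le_max_l N1 N2). pose proof (Nat.le_max_r N1 N2). specialize (H1 n ltac:(lia)). specialize (H2 n ltac:(lia)).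
  replace (u n + v n - (l + m))%C with ((u n - l) + (v n - m))%C by ring.
  pose proof (Cmod_triangle (u n - l) (v n - m)). lra.
Qed.

Lemma cv_opp u l : cv u l -> cv (fun n => - u n)%C (- l)%C.
Proof.
  intros Hu eps He. destruct (Hu eps He) as [N H]. exists N. intros n Hn.
  replace (- u n - - l)%C with (- (u n - l))%C by ring. rewrite Cmod_opp. auto.
Qed.

Lemma cv_minus u v l m : cv u l -> cv v m -> cv (fun n => u n - v n)%C (l - m)%C.
Proof. intros. apply cv_plus; auto. apply cv_opp; auto. Qed.

Lemma cv_const c : cv (fun _ => c) c.
Proof. intros eps He. exists O. intros. replace (c - c)%C with (RtoC 0) by ring. rewrite Cmod_0. auto. Qed.

Lemma cv_ext u v l : (forall n, u n = v n) -> cv u l -> cv v l.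
Proof. intros E H eps He. destruct (H eps He) as [N HN]. exists N. intros. rewrite <- E. auto. Qed.

Lemma cv_ext_ev u v l N0 : (forall n, (N0 <= n)%nat -> u n = v n) -> cv u l -> cv v l.
Proof. intros E H eps He. destruct (H eps He) as [N HN]. exists (max N N0). intros. pose proof (Nat.le_max_l N N0). pose proof (Nat.le_max_r N N0).
  rewrite <- E by lia. apply HN; lia. Qed.

Lemma cv_scal c u l : cv u l -> cv (fun n => c * u n)%C (c * l)%C.
Proof.
  intros Hu eps He. set (k := Cmod c + 1). assert (Hk : 0 < k) by (pose proof (Cmod_ge_0 c); unfold k; lra).
  destruct (Hu (eps / k)) as [N H]. { apply Rdiv_lt_0_compat; auto. }
  exists N. intros n Hn. replace (c * u n - c * l)%C with (c * (u n - l))%C by ring.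
  rewrite Cmod_mult. specialize (H n Hn).
  apply Rle_lt_trans with (k * Cmod (u n - l)).
  { apply Rmult_le_compat_r. apply Cmod_ge_0. unfold k; lra. }
  replace eps with (k * (eps / k)) by (field; lra). apply Rmult_lt_compat_l; auto.
Qed.

Lemma cv_shift u l : cv u l -> cv (fun n => u (S n)) l.
Proof. intros H eps He. destruct (H eps He) as [N HN]. exists N. intros. apply HN. lia. Qed.

Lemma geom_to0 r : 0 <= r < 1 -> forall eps, 0 < eps -> exists N, forall n, (N <= n)%nat -> r ^ n < eps.
Proof.
  intros Hr eps He. destruct (pow_lt_1_zero r ltac:(rewrite Rabs_pos_eq; lra) eps He) as [N HN].
  exists N. intros n Hn. specialize (HN n ltac:(lia)). rewrite Rabs_pos_eq in HN; auto. apply pow_le; lra.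
Qed.

Lemma cv_bound0 u C r : 0 <= r < 1 -> (forall n, Cmod (u n) <= C * r ^ n) -> cv u (RtoC 0).
Proof.
  intros Hr Hb eps He. set (k := Rabs C + 1).
  assert (Hk : 0 < k) by (pose proof (Rabs_pos C); unfold k; lra).
  destruct (geom_to0 r Hr (eps / k)) as [N HN]. { apply Rdiv_lt_0_compat; auto. }
  exists N. intros n Hn. replace (u n - 0)%C with (u n) by ring.
  apply Rle_lt_trans with (C * r ^ n); auto.
  apply Rle_lt_trans with (k * r ^ n).
  { apply Rmult_le_compat_r. apply pow_le; lra. pose proof (Rle_abs C). unfold k; lra. }
  replace eps with (k * (eps / k)) by (field; lra). apply Rmult_lt_compat_l; auto.
Qed.

Lemma cv_le u l v B : cv u l -> (forall n, Cmod (u n - v) <= B) -> Cmod (l - v) <= B.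
Proof.
  intros H Hb. apply Rnot_lt_le. intro Hlt.
  destruct (H (Cmod (l - v) - B)) as [N HN]; [lra|].
  specialize (HN N (le_n _)). pose proof (Cmod_tri3 l (u N) v). specialize (Hb N).
  rewrite (Cmod_sub_sym (u N)) in HN. lra.
Qed.

Lemma cv_le_ev u l v B N0 : cv u l -> (forall n, (N0 <= n)%nat -> Cmod (u n - v) <= B) -> Cmod (l - v) <= B.
Proof.
  intros H Hb. apply (cv_le (fun n => u (n + N0)%nat)). 
  - intros eps He. destruct (H eps He) as [N HN]. exists N. intros. apply HN. lia.
  - intros. apply Hb. lia.
Qed.

Lemma Cmult_neq0 x y : x <> RtoC 0 -> y <> RtoC 0 -> (x * y)%C <> RtoC 0.
Proof. intros Hx Hy E. apply Cmod_gt_0 in Hx. apply Cmod_gt_0 in Hy.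
  assert (Cmod (x * y) = 0) by (rewrite E; apply Cmod_0). rewrite Cmod_mult in H. nra. Qed.

Lemma ps_ext f g N : (forall k, (k < N)%nat -> f k = g k) -> ps f N = ps g N.
Proof. induction N; simpl; intros; auto. rewrite IHN by (intros; apply H; lia). rewrite H by lia. auto. Qed.
Lemma ps_plus f g N : ps (fun k => f k + g k)%C N = (ps f N + ps g N)%C.
Proof. induction N; simpl. ring. rewrite IHN. ring. Qed.
Lemma ps_minus f g N : ps (fun k => f k - g k)%C N = (ps f N - ps g N)%C.
Proof. induction N; simpl. ring. rewrite IHN. ring. Qed.
Lemma ps_scal c f N : ps (fun k => c * f k)%C N = (c * ps f N)%C.
Proof. induction N; simpl. ring. rewrite IHN. ring. Qed.
Lemma ps_shift f N : ps f (S N) = (f O + ps (fun k => f (S k)) N)%C.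
Proof. induction N. simpl. ring. change (ps f (S (S N))) with (ps f (S N) + f (S N))%C. rewrite IHN. simpl. ring. Qed.
Lemma ps_tel g N : ps (fun k => g k - g (S k))%C N = (g O - g N)%C.
Proof. induction N; simpl. ring. rewrite IHN. ring. Qed.
Lemma ps_zero N : ps (fun _ => RtoC 0) N = RtoC 0.
Proof. induction N; simpl; auto. rewrite IHN. ring. Qed.

Lemma rps_le f g N : (forall k, (k < N)%nat -> f k <= g k) -> rps f N <= rps g N.
Proof. induction N; simpl; intros. lra. pose proof (H N ltac:(lia)). pose proof (IHN ltac:(intros; apply H; lia)). lra. Qed.
Lemma rps_nonneg f N : (forall k, 0 <= f k) -> 0 <= rps f N.
Proof. induction N; simpl; intros. lra. pose proof (H N). pose proof (IHN H). lra. Qed.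
Lemma rps_scal c f N : rps (fun k => c * f k) N = c * rps f N.
Proof. induction N; simpl. ring. rewrite IHN. ring. Qed.
Lemma ps_cmod f N : Cmod (ps f N) <= rps (fun k => Cmod (f k)) N.
Proof. induction N; simpl. rewrite Cmod_0. lra. pose proof (Cmod_triangle (ps f N) (f N)). lra. Qed.

Lemma rps_geom r N : 0 <= r < 1 -> rps (fun k => r ^ k) N = (1 - r ^ N) / (1 - r).
Proof. intros Hr. induction N; simpl. field. lra. rewrite IHN. field. lra. Qed.
Lemma rps_geom_le r N : 0 <= r < 1 -> rps (fun k => r ^ k) N <= 1 / (1 - r).
Proof. intros Hr. rewrite rps_geom by auto. unfold Rdiv. apply Rmult_le_compat_r.
  apply Rlt_le, Rinv_0_lt_compat; lra. pose proof (pow_le r N). lra. Qed.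

Lemma Cmod_1_sub y : 1 - Cmod y <= Cmod (1 - y).
Proof. pose proof (Cmod_triangle (1 - y) y). replace (1 - y + y)%C with (RtoC 1) in H by ring. rewrite Cmod_1 in H. lra. Qed.
Lemma Cmod_1_add y : Cmod (1 - y) <= 1 + Cmod y.
Proof. pose proof (Cmod_triangle 1 (- y)). rewrite Cmod_1, Cmod_opp in H. exact H. Qed.

Section Q.
Variable q : C.
Hypothesis Hq : Cmod q < 1.

Lemma Hq0 : 0 <= Cmod q < 1.
Proof. split; auto. apply Cmod_ge_0. Qed.

Lemma qp_add x k n : qp x q (k + n) = (qp x q k * qp (x * q ^ k) q n)%C.
Proof. induction n; simpl. rewrite Nat.add_0_r. ring. replace (k + S n)%nat with (S (k + n)) by lia. simpl.
  rewrite IHn, Cpow_add_r. ring. Qed.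

Lemma qp_shift x n : qp x q (S n) = ((1 - x) * qp (x * q) q n)%C.
Proof. induction n. simpl. ring. change (qp x q (S (S n))) with (qp x q (S n) * (1 - x * q ^ (S n)))%C.
  rewrite IHn. simpl. ring. Qed.

Lemma pow_ne1 n : (0 < n)%nat -> (1 - q ^ n)%C <> RtoC 0.
Proof. intros Hn H. assert (q ^ n = 1)%C. { replace (q^n)%C with (1 - (1 - q^n))%C by ring. rewrite H. ring. }
  assert (Cmod (q ^ n) = 1) by (rewrite H0; apply Cmod_1). rewrite Cmod_pow in H1.
  pose proof Hq0. assert (Cmod q ^ n < 1). { destruct n. lia. apply pow_lt_1_compat. lra. lia. } lra. Qed.

Lemma pow_le1 r n : 0 <= r <= 1 -> r ^ n <= 1.
Proof. intros H. induction n; simpl. lra. pose proof (pow_le r n ltac:(lra)). nra. Qed.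
Lemma pow_le_r r n : 0 <= r <= 1 -> (0 < n)%nat -> r ^ n <= r.
Proof. intros H Hn. destruct n. lia. simpl. pose proof (pow_le1 r n H). pose proof (pow_le r n ltac:(lra)). nra. Qed.
Lemma exp_le x y : x <= y -> exp x <= exp y.
Proof. intros [H|H]. apply Rlt_le, exp_increasing; auto. subst; lra. Qed.

Lemma Cmod_1_pow n : (0 < n)%nat -> 1 - Cmod q <= Cmod (1 - q ^ n).
Proof. intros Hn. eapply Rle_trans; [|apply Cmod_1_sub]. rewrite Cmod_pow.
  pose proof Hq0. pose proof (pow_le_r (Cmod q) n ltac:(lra) Hn). lra. Qed.

Lemma qp_upper x : exists K, 0 < K /\ forall n, Cmod (qp x q n) <= K.
Proof.
  pose proof Hq0 as Hq'.
  exists (exp (Cmod x / (1 - Cmod q))). split. apply exp_pos.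
  assert (forall n, Cmod (qp x q n) <= exp (Cmod x * rps (fun k => Cmod q ^ k) n)).
  { induction n; simpl. rewrite Cmod_1, Rmult_0_r, exp_0. lra.
    rewrite Cmod_mult. rewrite Rmult_plus_distr_l, exp_plus.
    pose proof (Cmod_1_add (x * q ^ n)). rewrite Cmod_mult, Cmod_pow in H.
    pose proof (exp_ineq1_le (Cmod x * Cmod q ^ n)).
    apply Rmult_le_compat; [apply Cmod_ge_0|apply Cmod_ge_0|exact IHn|lra]. }
  intros n. eapply Rle_trans. apply H. apply exp_le. unfold Rdiv.
  apply Rmult_le_compat_l. apply Cmod_ge_0. pose proof (rps_geom_le (Cmod q) n Hq'). lra.
Qed.

Lemma finite_min (f : nat -> R) N : (forall n, (n <= N)%nat -> 0 < f n) -> exists d, 0 < d /\ forall n, (n <= N)%nat -> d <= f n.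
Proof.
  induction N; intros H.
  - exists (f O). split. apply H; lia. intros n Hn. replace n with O by lia. lra.
  - destruct IHN as [d [Hd Hd']]; [intros; apply H; lia|].
    exists (Rmin d (f (S N))). split. { apply Rmin_pos; [auto|apply H; lia]. }
    intros n Hn. destruct (Nat.eq_dec n (S N)). subst. apply Rmin_r.
    eapply Rle_trans. apply Rmin_l. apply Hd'. lia.
Qed.

Lemma rps_ext f g N : (forall k, f k = g k) -> rps f N = rps g N.
Proof. intros H. induction N; simpl; auto. rewrite IHN, H. auto. Qed.

Lemma qp_lower x : (forall n, qp x q n <> RtoC 0) -> exists d, 0 < d /\ forall n, d <= Cmod (qp x q n).
Proof.
  intros Hnz. pose proof Hq0 as Hr.
  remember (Cmod q) as r eqn:Er. remember (Cmod x) as c eqn:Ec.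
  assert (Hc : 0 <= c) by (subst; apply Cmod_ge_0).
  destruct (geom_to0 r Hr ((1 - r) / (2 * (c + 1)))) as [N HN].
  { apply Rdiv_lt_0_compat; lra. }
  specialize (HN N (le_n _)).
  assert (Hsmall : c * r ^ N / (1 - r) <= 1/2).
  { assert (c * r ^ N <= (c + 1) * r ^ N). { pose proof (pow_le r N ltac:(lra)). nra. }
    assert ((c + 1) * r ^ N <= (c+1) * ((1 - r) / (2 * (c + 1)))) by (apply Rmult_le_compat_l; lra).
    replace ((c + 1) * ((1 - r) / (2 * (c + 1)))) with ((1 - r) / 2) in H0 by (field; lra).
    apply (Rmult_le_reg_r (1 - r)). lra. unfold Rdiv. rewrite Rmult_assoc, Rinv_l by lra. lra. }
  assert (Hs : forall m, 0 <= c * rps (fun k => r ^ (N + k)) m <= 1/2).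
  { intros m. rewrite (rps_ext _ (fun k => r ^ N * r ^ k)) by (intros; apply pow_add).
    rewrite rps_scal. pose proof (rps_geom_le r m Hr). pose proof (rps_nonneg (fun k => r ^ k) m (fun k => pow_le r k ltac:(lra))).
    pose proof (pow_le r N ltac:(lra)). split. apply Rmult_le_pos; auto. apply Rmult_le_pos; auto.
    eapply Rle_trans; [|apply Hsmall]. unfold Rdiv. rewrite Rmult_assoc. apply Rmult_le_compat_l; auto.
    apply Rmult_le_compat_l; auto. replace (/ (1-r)) with (1/(1-r)) by (unfold Rdiv; ring). exact H. }
  assert (Hm : forall m, Cmod (qp x q (N + m)) >= Cmod (qp x q N) * (1 - c * rps (fun k => r ^ (N + k)) m)).
  { induction m.
    - simpl. rewrite Nat.add_0_r. lra.
    - replace (N + S m)%nat with (S (N + m)) by lia. simpl qp. rewrite Cmod_mult.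
      pose proof (Hs (S m)) as Hs1. pose proof (Hs m) as Hs0. simpl rps in Hs1 |- *.
      pose proof (Cmod_1_sub (x * q ^ (N + m))) as Ht. rewrite Cmod_mult, Cmod_pow, <- Er, <- Ec in Ht.
      pose proof (pow_le r (N + m) ltac:(lra)).
      assert (0 <= c * r ^ (N + m)) by (apply Rmult_le_pos; auto).
      pose proof (Cmod_ge_0 (qp x q N)). pose proof (Cmod_ge_0 (qp x q (N + m))).
      set (t := c * r ^ (N + m)) in *. set (sm := c * rps (fun k => r ^ (N + k)) m) in *.
      assert (Hcm : Cmod (qp x q (N + m)) * Cmod (1 - x * q ^ (N + m)) >= Cmod (qp x q (N + m)) * (1 - t)).
      { apply Rle_ge, Rmult_le_compat_l; auto. }
      assert (Cmod (qp x q (N + m)) * (1 - t) >= Cmod (qp x q N) * (1 - sm) * (1 - t)).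
      { rewrite Rmult_plus_distr_l in Hs1. change (c * rps (fun k : nat => r ^ (N + k)) m) with sm in Hs1.
        change (c * r^(N+m)) with t in Hs1. apply Rle_ge, Rmult_le_compat_r. lra. lra. }
      rewrite Rmult_plus_distr_l in Hs1 |- *. change (c * rps (fun k : nat => r ^ (N + k)) m) with sm in Hs1 |- *.
        change (c * r^(N+m)) with t in Hs1 |- *.
      assert (0 <= Cmod (qp x q N) * sm * t) by (apply Rmult_le_pos; [apply Rmult_le_pos|]; lra).
      assert (E: Cmod (qp x q N) * (1 - sm) * (1 - t) = Cmod (qp x q N) * (1 - (sm + t)) + Cmod (qp x q N) * sm * t) by ring.
      lra. }
  assert (HN0 : 0 < Cmod (qp x q N)) by (apply Cmod_gt_0; auto).
  destruct (finite_min (fun n => Cmod (qp x q n)) N) as [d [Hd Hd']].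
  { intros. apply Cmod_gt_0; auto. }
  exists (Rmin d (Cmod (qp x q N) / 2)). split. apply Rmin_pos; lra.
  intros n. destruct (Compare_dec.le_lt_dec n N).
  - eapply Rle_trans. apply Rmin_l. apply Hd'; auto.
  - eapply Rle_trans. apply Rmin_r. replace n with (N + (n - N))%nat by lia.
    pose proof (Hm (n - N)%nat). pose proof (Hs (n - N)%nat). nra.
Qed.

End Q.

Lemma cv_ps (h : nat -> nat -> C) (l : nat -> C) K :
  (forall k, cv (fun N => h k N) (l k)) -> cv (fun N => ps (fun k => h k N) K) (ps l K).
Proof. intros H. induction K; simpl. apply cv_const. apply cv_plus; auto. Qed.

Lemma qp_nz_shift q x K n : (forall m, qp x q m <> RtoC 0) -> qp (x * q ^ K) q n <> RtoC 0.
Proof. intros H E. apply (H (K + n)%nat). rewrite qp_add, E. ring. Qed.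

Lemma qp_S_nz q x k : (forall m, qp x q m <> RtoC 0) -> (1 - x * q ^ k)%C <> RtoC 0.
Proof. intros H E. apply (H (S k)). simpl. rewrite E. ring. Qed.

Lemma qp_shift_lower q x K : Cmod q < 1 -> (forall m, qp x q m <> RtoC 0) ->
  exists d, 0 < d /\ forall n, d <= Cmod (qp (x * q ^ K) q n).
Proof.
  intros Hq H. destruct (qp_lower q Hq x H) as [d [Hd Hd']]. destruct (qp_upper q Hq x) as [K0 [HK HK']].
  exists (d / K0). split. apply Rdiv_lt_0_compat; auto. intros n.
  specialize (Hd' (K + n)%nat). rewrite qp_add, Cmod_mult in Hd'. specialize (HK' K).
  pose proof (Cmod_ge_0 (qp (x * q ^ K) q n)).
  apply (Rmult_le_reg_l K0); auto. replace (K0 * (d / K0)) with d by (field; lra).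
  eapply Rle_trans. apply Hd'. apply Rmult_le_compat_r; auto.
Qed.

Section PartB.
Variables q a z : C.
Hypothesis Hq : Cmod q < 1.
Hypothesis Hz : z <> RtoC 0.
Hypothesis Hw : Cmod (q * a / z) < 1.
Hypothesis HA : forall n, qp (q * a) q n <> RtoC 0.
Hypothesis HW : forall n, qp (q * a / z) q n <> RtoC 0.

Let A := (q * a)%C.
Let w := (q * a / z)%C.

Definition uB K n := (qp z q n * (w * q ^ K) ^ n / (qp (A * q ^ K) q n * (1 - q ^ n)))%C.
Definition sB K n := (qp z q n * (w * q ^ K) ^ n / qp (A * q ^ K) q n)%C.
Definition PB K N := ps (fun i => uB K (S i)) N.

Lemma zw : (z * w = A)%C.
Proof. unfold w, A. field. auto. Qed.

Lemma keyB K n : (0 < n)%nat -> (uB K n - uB (S K) n = (sB K n - sB K (S n)) / (1 - w * q ^ K))%C.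
Proof.
  intros Hn. unfold uB, sB.
  pose proof (qp_shift q (A * q ^ K) n) as Hs. simpl qp in Hs |- *.
  rewrite !Cpow_S in *.
  replace (A * (q * q ^ K))%C with (A * q ^ K * q)%C by ring.
  set (X := (A * q ^ K)%C) in *. set (Y := qp X q n) in *. set (Y' := qp (X * q) q n) in *.
  set (p := (q ^ n)%C) in *. set (v := (w * q ^ K)%C) in *.
  replace ((v * q) ^ n)%C with (v ^ n * p)%C by (unfold p; rewrite Cpow_mult_l; ring).
  replace ((w * (q * q ^ K)) ^ n)%C with (v ^ n * p)%C by (unfold v, p; rewrite <- Cpow_mult_l; f_equal; ring).
  assert (HX : (X = z * v)%C). { unfold X, v. rewrite <- zw. ring. }
  assert (HY : Y <> RtoC 0) by (apply qp_nz_shift; auto).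
  assert (HX1 : (1 - X)%C <> RtoC 0) by (unfold X; apply qp_S_nz; auto).
  assert (HXp : (1 - X * p)%C <> RtoC 0).
  { unfold X, p. replace (A * q ^ K * q ^ n)%C with (A * q ^ (K + n))%C by (rewrite Cpow_add_r; ring). apply qp_S_nz; auto. }
  assert (Hp : (1 - p)%C <> RtoC 0) by (apply pow_ne1; auto).
  assert (Hv : (1 - v)%C <> RtoC 0) by (apply qp_S_nz; auto).
  assert (HY' : Y' = (Y * (1 - X * p) / (1 - X))%C). { rewrite Hs. field. auto. }
  rewrite HY'. rewrite HX in *. field. repeat split; auto.
Qed.

Lemma PB_step K N : (PB K N - PB (S K) N = (sB K 1 - sB K (S N)) / (1 - w * q ^ K))%C.
Proof.
  unfold PB. rewrite <- ps_minus.
  rewrite (ps_ext _ (fun i => / (1 - w * q ^ K) * (sB K (S i) - sB K (S (S i))))%C).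
  2:{ intros i _. rewrite keyB by lia. unfold Cdiv. ring. }
  rewrite ps_scal. rewrite (ps_tel (fun i => sB K (S i))). unfold Cdiv. ring.
Qed.

Definition gB k := (sB k 1 / (1 - w * q ^ k))%C.
Definition hB k N := (sB k (S N) / (1 - w * q ^ k))%C.

Lemma PB_decomp K N : PB O N = (ps (fun k => gB k - hB k N) K + PB K N)%C.
Proof.
  induction K; simpl. ring. rewrite IHK. pose proof (PB_step K N). unfold gB, hB.
  replace (PB K N) with (PB (S K) N + (sB K 1 - sB K (S N)) / (1 - w * q ^ K))%C
    by (rewrite <- H; ring). unfold Cdiv. ring.
Qed.

Lemma Cmod_w : 0 <= Cmod w < 1.
Proof. split. apply Cmod_ge_0. exact Hw. Qed.

Lemma PB_bound : exists B, forall K N, Cmod (PB K N) <= B * Cmod q ^ K.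
Proof.
  destruct (qp_upper q Hq z) as [Kz [HKz HKz']].
  destruct (qp_lower q Hq A HA) as [dA [HdA HdA']].
  destruct (qp_upper q Hq A) as [KA [HKA HKA']].
  pose proof (Hq0 q Hq) as Hq'. pose proof Cmod_w as Hw'.
  set (C0 := Kz * KA / (dA * (1 - Cmod q))).
  assert (HC0 : 0 < C0) by (unfold C0; apply Rdiv_lt_0_compat; [nra| apply Rmult_lt_0_compat; lra]).
  exists (C0 / (1 - Cmod w)). intros K N. unfold PB.
  eapply Rle_trans. apply ps_cmod.
  eapply Rle_trans. apply (rps_le _ (fun i => C0 * Cmod q ^ K * Cmod w ^ i)).
  { intros i _. unfold uB. unfold Cdiv. rewrite !Cmod_mult, Cmod_inv, Cmod_mult.
    2:{ apply Cmult_neq0. apply qp_nz_shift; auto. apply pow_ne1; auto. lia. }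
    rewrite Cmod_pow, Cmod_mult, Cmod_pow.
    assert (Hl : dA / KA <= Cmod (qp (A * q ^ K) q (S i))).
    { specialize (HdA' (K + S i)%nat). rewrite qp_add, Cmod_mult in HdA'. specialize (HKA' K).
      pose proof (Cmod_ge_0 (qp (A * q ^ K) q (S i))).
      apply (Rmult_le_reg_l KA); auto. replace (KA * (dA / KA)) with dA by (field; lra).
      eapply Rle_trans. apply HdA'. apply Rmult_le_compat_r; auto. }
    pose proof (Cmod_1_pow q Hq (S i) ltac:(lia)) as H1.
    assert (Hpw : (Cmod w * Cmod q ^ K) ^ S i <= Cmod q ^ K * Cmod w ^ i).
    { set (m := Cmod q ^ K). assert (Hm : 0 <= m <= 1) by (unfold m; split; [apply pow_le; lra|apply pow_le1; lra]).
      simpl. rewrite Rpow_mult_distr.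
      assert (Hmi : m ^ i <= 1) by (apply pow_le1; lra).
      pose proof (pow_le (Cmod w) i ltac:(lra)). pose proof (pow_le m i ltac:(lra)).
      assert (Cmod w ^ i * m ^ i <= Cmod w ^ i) by nra.
      assert (Cmod w * m <= m) by nra.
      assert (0 <= Cmod w * m) by nra.
      apply Rle_trans with (m * (Cmod w ^ i * m ^ i)). apply Rmult_le_compat_r; nra.
      apply Rmult_le_compat_l; lra. }
    fold A.
    set (P := Cmod (qp A q (S i))) in *.
    unfold C0.
    assert (HD : dA / KA * (1 - Cmod q) <= Cmod (qp (A * q ^ K) q (S i)) * Cmod (1 - q ^ S i)).
    { apply Rmult_le_compat; auto. apply Rlt_le, Rdiv_lt_0_compat; auto. lra. }
    assert (HD0 : 0 < dA / KA * (1 - Cmod q)) by (apply Rmult_lt_0_compat; [apply Rdiv_lt_0_compat|]; lra).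
    pose proof (Rinv_le_contravar _ _ HD0 HD) as HI.
    replace (/ (dA / KA * (1 - Cmod q))) with (KA / (dA * (1 - Cmod q))) in HI by (field; split; lra).
    replace (Kz * KA / (dA * (1 - Cmod q)) * Cmod q ^ K * Cmod w ^ i)
      with (Kz * (Cmod q ^ K * Cmod w ^ i) * (KA / (dA * (1 - Cmod q)))) by (unfold Rdiv; ring).
    apply Rmult_le_compat; auto.
    - apply Rmult_le_pos. apply Cmod_ge_0. apply pow_le, Rmult_le_pos; [lra|apply pow_le; lra].
    - apply Rlt_le, Rinv_0_lt_compat. lra.
    - apply Rmult_le_compat; auto. apply Cmod_ge_0. apply pow_le, Rmult_le_pos; [lra|apply pow_le; lra]. }
  rewrite rps_scal. pose proof (rps_geom_le (Cmod w) N Hw').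
  replace (C0 / (1 - Cmod w) * Cmod q ^ K) with (C0 * Cmod q ^ K * (1 / (1 - Cmod w))) by (field; lra).
  apply Rmult_le_compat_l; auto. apply Rmult_le_pos. lra. apply pow_le; lra.
Qed.

Lemma hB_cv k : cv (fun N => hB k N) (RtoC 0).
Proof.
  destruct (qp_upper q Hq z) as [Kz [HKz HKz']].
  destruct (qp_shift_lower q A k Hq HA) as [d [Hd Hd']].
  pose proof (Hq0 q Hq) as Hq'. pose proof Cmod_w as Hw'.
  assert (Hv : (1 - w * q ^ k)%C <> RtoC 0) by (apply qp_S_nz; auto).
  apply (cv_bound0 _ (Kz / d * / Cmod (1 - w * q ^ k)) (Cmod w)); auto.
  intros N. unfold hB, sB, Cdiv. rewrite !Cmod_mult, !Cmod_inv; auto. 2:{ apply qp_nz_shift; auto. }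
  rewrite Cmod_pow, Cmod_mult, Cmod_pow.
  assert (Hm : 0 <= Cmod q ^ k <= 1) by (split; [apply pow_le; lra|apply pow_le1; lra]).
  assert (Hp : (Cmod w * Cmod q ^ k) ^ S N <= Cmod w ^ N).
  { simpl. rewrite Rpow_mult_distr. pose proof (pow_le1 _ N Hm). pose proof (pow_le (Cmod w) N ltac:(lra)).
    pose proof (pow_le (Cmod q ^ k) N ltac:(lra)). assert (Cmod w * Cmod q ^ k <= 1) by nra.
    assert (0 <= Cmod w * Cmod q ^ k) by (apply Rmult_le_pos; lra).
    assert (Cmod w ^ N * (Cmod q ^ k) ^ N <= Cmod w ^ N) by nra.
    assert (0 <= Cmod w ^ N * (Cmod q ^ k) ^ N) by (apply Rmult_le_pos; lra).
    apply Rle_trans with (1 * (Cmod w ^ N * (Cmod q ^ k) ^ N)). apply Rmult_le_compat_r; lra. lra. }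
  pose proof (Hd' (S N)). pose proof (HKz' (S N)).
  assert (0 < Cmod (1 - w * q ^ k)) by (apply Cmod_gt_0; auto).
  pose proof (Rinv_le_contravar _ _ Hd (Hd' (S N))).
  replace (Kz / d * / Cmod (1 - w * q ^ k) * Cmod w ^ N) with (Kz * Cmod w ^ N * / d * / Cmod (1 - w * q ^ k)) by (unfold Rdiv; ring).
  apply Rmult_le_compat_r. apply Rlt_le, Rinv_0_lt_compat; auto.
  apply Rmult_le_compat; auto.
  - apply Rmult_le_pos. apply Cmod_ge_0. apply pow_le. apply Rmult_le_pos; lra.
  - apply Rlt_le, Rinv_0_lt_compat. apply Rlt_le_trans with d; auto.
  - apply Rmult_le_compat; auto. apply Cmod_ge_0. apply pow_le. apply Rmult_le_pos; lra.
Qed.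

Lemma gB_eq k : gB k = (a * q ^ (S k) / z / (1 - a * q ^ (S k) / z) - a * q ^ (S k) / (1 - a * q ^ (S k)))%C.
Proof.
  assert (Hv : (1 - w * q ^ k)%C <> RtoC 0) by (apply qp_S_nz; auto).
  assert (HX : (1 - A * q ^ k)%C <> RtoC 0) by (apply qp_S_nz; auto).
  unfold gB, sB. simpl qp. rewrite Cpow_S. simpl Cpow.
  unfold w, A in *.
  replace (a * (q * q ^ k) / z)%C with (q * a / z * q ^ k)%C by (field; auto).
  replace (a * (q * q ^ k))%C with (q * a * q ^ k)%C by ring.
  field. repeat split; auto.
  intro E. apply Hv. replace (1 - q*a/z*q^k)%C with ((z - q*a*q^k)/z)%C by (field; auto). rewrite E. unfold Cdiv; ring.
Qed.

Theorem partB f2 f3 f4 :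
  cv (ps (fun k => qp z q (S k) / (qp (q * a) q (S k) * (1 - q ^ (S k))) * (q * a / z) ^ (S k)))%C f2 ->
  cv (ps (fun k => a * q ^ (S k) / z / (1 - a * q ^ (S k) / z)))%C f3 ->
  cv (ps (fun k => a * q ^ (S k) / (1 - a * q ^ (S k))))%C f4 -> f2 = (f3 - f4)%C.
Proof.
  intros H2 H3 H4.
  assert (Hg : cv (ps gB) (f3 - f4)%C).
  { eapply cv_ext. 2: apply (cv_minus _ _ _ _ H3 H4). intros n. simpl.
    rewrite <- ps_minus. apply ps_ext. intros. rewrite gB_eq. auto. }
  assert (HP : cv (PB O) f2).
  { eapply cv_ext. 2: apply H2. intros N. unfold PB. apply ps_ext. intros k _. unfold uB.
    change (q ^ 0)%C with (RtoC 1). replace (w * 1)%C with w by ring. replace (A * 1)%C with A by ring.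
    unfold w, A, Cdiv. ring. }
  destruct PB_bound as [B HB].
  assert (Hd : cv (fun K => f2 - ps gB K)%C (RtoC 0)).
  { apply (cv_bound0 _ (Rabs B) (Cmod q)). apply Hq0; auto.
    intros K. replace (f2 - ps gB K)%C with (f2 - ps gB K)%C by ring.
    apply (cv_le (fun N => PB O N + ps (fun k => hB k N) K)%C).
    - replace f2 with (f2 + 0)%C by ring. apply (cv_plus (PB O) (fun N => ps (fun k => hB k N) K)). auto.
      rewrite <- (ps_zero K). apply cv_ps. apply hB_cv.
    - intros N. rewrite (PB_decomp K N). rewrite ps_minus.
      replace (ps gB K - ps (fun k => hB k N) K + PB K N + ps (fun k => hB k N) K - ps gB K)%C
        with (PB K N) by ring.
      eapply Rle_trans. apply HB. apply Rmult_le_compat_r. apply pow_le, Cmod_ge_0. apply Rle_abs. }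
  assert (Hg2 : cv (fun K => f2 - (f2 - ps gB K))%C (f2 - 0)%C) by (apply cv_minus; [apply cv_const|exact Hd]).
  replace (f2 - 0)%C with f2 in Hg2 by ring.
  apply (cv_ext _ (ps gB)) in Hg2. 2:{ intros; ring. }
  eapply cv_unique; eauto.
Qed.

End PartB.

Lemma sum_rps f n : sum_f_R0 f n = rps f (S n).
Proof. induction n; simpl. ring. rewrite IHn. simpl. ring. Qed.

Lemma rps_split f J L : rps f (J + L) = rps f J + rps (fun i => f (J + i)%nat) L.
Proof. induction L; simpl. rewrite Nat.add_0_r. ring. rewrite Nat.add_succ_r. simpl. rewrite IHL. ring. Qed.

Lemma ps_split f J L : ps f (J + L) = (ps f J + ps (fun i => f (J + i)%nat) L)%C.
Proof. induction L; simpl. rewrite Nat.add_0_r. ring. rewrite Nat.add_succ_r. simpl. rewrite IHL. ring. Qed.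

Lemma pow_anti r m n : 0 <= r <= 1 -> (m <= n)%nat -> r ^ n <= r ^ m.
Proof. intros Hr Hmn. replace n with (m + (n - m))%nat by lia. rewrite pow_add.
  pose proof (pow_le1 r (n - m) Hr). pose proof (pow_le r m ltac:(lra)). pose proof (pow_le r (n-m) ltac:(lra)). nra. Qed.

Lemma conv_to0 (x : nat -> R) l r : (forall i, 0 <= x i) -> Un_cv (sum_f_R0 x) l -> 0 <= r < 1 ->
  forall eps, 0 < eps -> exists N0, forall N, (N0 <= N)%nat -> rps (fun i => x i * r ^ (N - i)) N < eps.
Proof.
  intros Hx Hl Hr eps He.
  assert (Hg : Un_growing (sum_f_R0 x)). { intro n. simpl. pose proof (Hx (S n)). lra. }
  pose proof (growing_ineq _ _ Hg Hl) as Hle.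
  destruct (Hl (eps / 2)) as [J HJ]. lra.
  specialize (HJ J (le_n _)). unfold R_dist in HJ. rewrite sum_rps in HJ.
  set (SJ := rps x (S J)) in *.
  assert (HSJ : 0 <= SJ) by (apply rps_nonneg; auto).
  destruct (geom_to0 r Hr (eps / (2 * (SJ + 1)))) as [K HK]. { apply Rdiv_lt_0_compat; lra. }
  exists (S J + K)%nat. intros N HN.
  set (f := fun i => x i * r ^ (N - i)).
  assert (E : N = (S J + (N - S J))%nat) by lia. rewrite E. rewrite rps_split.
  assert (H1 : rps f (S J) <= r ^ K * SJ).
  { unfold SJ. rewrite <- rps_scal. apply rps_le. intros k Hk. unfold f.
    rewrite Rmult_comm. apply Rmult_le_compat_r; auto. apply pow_anti. lra. lia. }
  assert (H2 : rps (fun i => f (S J + i)%nat) (N - S J) <= rps (fun i => x (S J + i)%nat) (N - S J)).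
  { apply rps_le. intros k Hk. unfold f. pose proof (Hx (S J + k)%nat).
    pose proof (pow_le1 r (N - (S J + k)) ltac:(lra)). pose proof (pow_le r (N - (S J + k)) ltac:(lra)). nra. }
  assert (H3 : rps x N <= l).
  { destruct N. lia. rewrite <- sum_rps. apply Hle. }
  rewrite E, rps_split in H3. fold SJ in H3.
  assert (H4 : r ^ K * SJ <= eps / 2).
  { specialize (HK K (le_n _)). 
    assert (r ^ K * (2 * (SJ + 1)) < eps). { apply (Rmult_lt_compat_r (2 * (SJ + 1))) in HK. 2: lra.
      replace (eps / (2 * (SJ + 1)) * (2 * (SJ + 1))) with eps in HK by (field; lra). exact HK. }
    pose proof (pow_le r K ltac:(lra)). nra. }
  apply Rabs_def2 in HJ. lra.
Qed.

Lemma qpq_nz q : Cmod q < 1 -> forall n, qp q q n <> RtoC 0.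
Proof. intros Hq n. induction n; simpl. intro E. injection E. lra.
  apply Cmult_neq0; auto. replace (q * q ^ n)%C with (q ^ S n)%C by (rewrite Cpow_S; ring). apply pow_ne1; auto. lia. Qed.

Lemma Zalg (q a z Zs Qn Ws QM R1 p u : C) :
  z <> RtoC 0 -> QM <> RtoC 0 -> (1 - q * u)%C <> RtoC 0 -> (1 - q * (q * u))%C <> RtoC 0 ->
  R1 <> RtoC 0 -> (1 - q * a * (q * p * p * u))%C <> RtoC 0 -> (1 - q * a * p)%C <> RtoC 0 ->
  (1 - q * a / z * p)%C <> RtoC 0 -> (q * a / z - 1)%C <> RtoC 0 ->
  let w := (q * a / z)%C in
  let rho := ((1 - z * p) * (1 - p) * w / ((1 - q * a * p) * (1 - w * p)))%C in
  let lam := ((1 - rho) / (w - 1))%C in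
  (Zs * Qn * Ws / (QM * (R1 * (1 - q * a * (q * p * p * u)))) - rho * (Zs * Qn * Ws / (QM * (1 - q * u) * R1)) =
   lam * ((Zs * (1 - z * (q * p * u)) * (Qn * (1 - q * (p * u))) * (Ws * w)) /
           (QM * (1 - q * u) * (1 - q * (q * u)) * (R1 * (1 - q * a * (q * p * p * u)))) * (1 - q * (q * u))
          - Zs * Qn * Ws / (QM * (1 - q * u) * R1) * (1 - q * u)))%C.
Proof.
  intros. unfold lam, rho, w. field. repeat split; auto.
  - intro E. apply H6. replace (1 - q * a / z * p)%C with ((z - q * a * p) / z)%C by (field; auto). rewrite E. unfold Cdiv; ring.
  - intro E. apply H7. replace (q * a / z - 1)%C with ((q * a - z) / z)%C by (field; auto). rewrite E. unfold Cdiv; ring.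
Qed.

Lemma Zalg0 (q a z Zs Qn Ws R1 p : C) :
  z <> RtoC 0 -> (1 - q)%C <> RtoC 0 -> R1 <> RtoC 0 -> (1 - q * a * (p * p))%C <> RtoC 0 -> (1 - q * a * p)%C <> RtoC 0 ->
  (1 - q * a / z * p)%C <> RtoC 0 -> (q * a / z - 1)%C <> RtoC 0 ->
  let w := (q * a / z)%C in
  let rho := ((1 - z * p) * (1 - p) * w / ((1 - q * a * p) * (1 - w * p)))%C in
  let lam := ((1 - rho) / (w - 1))%C in
  (- rho * (Zs * Qn * Ws / (1 * R1)) =
   lam * ((Zs * (1 - z * p) * (Qn * (1 - p)) * (Ws * w)) / ((1 * (1 - q * 1)) * (R1 * (1 - q * a * (p * p)))) * (1 - q)))%C.
Proof.
  intros. unfold lam, rho, w. field. repeat split; auto.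
  - intro E. apply H4. replace (1 - q * a / z * p)%C with ((z - q * a * p) / z)%C by (field; auto). rewrite E. unfold Cdiv; ring.
  - intro E. apply H5. replace (q * a / z - 1)%C with ((q * a - z) / z)%C by (field; auto). rewrite E. unfold Cdiv; ring.
Qed.

Section PartA.
Variables q a z : C.
Variables alpha beta : nat -> C.
Hypothesis Hq : Cmod q < 1.
Hypothesis Hz : z <> RtoC 0.
Hypothesis Hw : Cmod (q * a / z) < 1.
Hypothesis HA : forall n, qp (q * a) q n <> RtoC 0.
Hypothesis HW : forall n, qp (q * a / z) q n <> RtoC 0.
Hypothesis Hb0 : alpha O = RtoC 1.
Hypothesis Hbn : forall n, (0 < n)%nat ->
  beta n = ps (fun j => alpha j / (qp q q (n - j) * qp (q * a) q (n + j)))%C (S n).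

Local Notation A := (q * a)%C.
Local Notation w := (q * a / z)%C.

Definition cA n := (qp z q n * qp q q (pred n) * w ^ n)%C.
Definition dA n := (qp z q n * qp q q (pred n) / (qp A q n * qp w q n) * w ^ n)%C.
Definition tA j m := (cA (j + m) / (qp q q m * qp A q (j + j + m)))%C.
Definition T1s k := (qp z q (S k) * qp q q k * w ^ (S k) * beta (S k))%C.
Definition T2s k := (qp z q (S k) * qp q q k / (qp A q (S k) * qp w q (S k)) * w ^ (S k) * alpha (S k))%C.
Definition F2s k := (qp z q (S k) / (qp A q (S k) * (1 - q ^ (S k))) * w ^ (S k))%C.
Definition RA N := ps (fun i => alpha (S i) * ps (tA (S i)) (N - i))%C N.

Lemma T1_step N : T1s N = (F2s N + ps (fun i => alpha (S i) * tA (S i) (N - i)) (S N))%C.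
Proof.
  unfold T1s. rewrite Hbn by lia. rewrite ps_shift. rewrite Hb0.
  rewrite Cmult_plus_distr_l. f_equal.
  - unfold F2s. rewrite Nat.sub_0_r, Nat.add_0_r. simpl (qp q q (S N)).
    replace (q * q ^ N)%C with (q ^ S N)%C by (rewrite Cpow_S; ring).
    field. repeat split; auto. apply pow_ne1; auto; lia. apply qpq_nz; auto.
  - rewrite <- ps_scal. apply ps_ext. intros i Hi. unfold tA, cA.
    replace (S i + (N - i))%nat with (S N) by lia.
    replace (S i + S i + (N - i))%nat with (S N + S i)%nat by lia.
    simpl pred. replace (S N - S i)%nat with (N - i)%nat by lia.
    field. split; auto. apply qpq_nz; auto.
Qed.

Lemma RA_step N : RA (S N) = (RA N + ps (fun i => alpha (S i) * tA (S i) (N - i)) (S N))%C.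
Proof.
  unfold RA. change (ps ?f (S N)) with (ps f N + f N)%C at 1.
  rewrite (ps_ext (fun i => alpha (S i) * ps (tA (S i)) (S N - i))%C
                  (fun i => alpha (S i) * ps (tA (S i)) (N - i) + alpha (S i) * tA (S i) (N - i))%C).
  2:{ intros i Hi. replace (S N - i)%nat with (S (N - i)) by lia. simpl. ring. }
  rewrite ps_plus. replace (S N - N)%nat with 1%nat by lia.
  simpl. rewrite Nat.sub_diag. ring.
Qed.

Lemma FI N : ps T1s N = (ps F2s N + RA N)%C.
Proof.
  induction N. simpl. unfold RA. simpl. ring.
  simpl. rewrite IHN, RA_step, T1_step. ring.
Qed.

Definition rhoA j := ((1 - z * q ^ j) * (1 - q ^ j) * w / ((1 - A * q ^ j) * (1 - w * q ^ j)))%C.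
Definition lamA j := ((1 - rhoA j) / (w - 1))%C.

Lemma qpS x m : qp x q (S m) = (qp x q m * (1 - x * q ^ m))%C.
Proof. reflexivity. Qed.

Lemma w1 : (w - 1)%C <> RtoC 0.
Proof. intro E. assert (w = 1)%C. { replace w with ((w - 1) + 1)%C by ring. rewrite E. ring. }
  pose proof Hw. rewrite H, Cmod_1 in H0. lra. Qed.

Lemma zAp p : (1 - w * p)%C <> RtoC 0 -> (z - A * p)%C <> RtoC 0.
Proof. intros H5 E. apply H5. replace (1 - q * a / z * p)%C with ((z - q * a * p) / z)%C by (field; auto). rewrite E. unfold Cdiv; ring. Qed.

Lemma zA : (z - A)%C <> RtoC 0.
Proof. replace (z - A)%C with (z - A * 1)%C by ring. apply zAp. intro E. apply w1.
  replace (w - 1)%C with (- (1 - w * 1))%C by ring. rewrite E. ring. Qed.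

Lemma AqS m : (1 - A * q ^ m)%C <> RtoC 0.
Proof. apply qp_S_nz; auto. Qed.
Lemma WqS m : (1 - w * q ^ m)%C <> RtoC 0.
Proof. apply qp_S_nz; auto. Qed.
Lemma qqS m : (1 - q * q ^ m)%C <> RtoC 0.
Proof. apply qp_S_nz. apply qpq_nz; auto. Qed.

Lemma Z1 j M : (0 < j)%nat ->
  (tA (S j) M - rhoA j * tA j (S M) = lamA j * (tA j (S (S M)) * (1 - q ^ (S (S M))) - tA j (S M) * (1 - q ^ (S M))))%C.
Proof.
  intros Hj. destruct j as [|j']; [lia|]. unfold tA, cA.
  set (n := (S j' + M)%nat). set (k := (S j' + S j' + M)%nat).
  replace (S (S j') + M)%nat with (S n) by (unfold n; lia).
  replace (S (S j') + S (S j') + M)%nat with (S (S k)) by (unfold k; lia).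
  replace (S j' + S M)%nat with (S n) by (unfold n; lia).
  replace (S j' + S j' + S M)%nat with (S k) by (unfold k; lia).
  replace (S j' + S (S M))%nat with (S (S n)) by (unfold n; lia).
  replace (S j' + S j' + S (S M))%nat with (S (S k)) by (unfold k; lia).
  simpl pred.
  set (p := (q ^ S j')%C). set (u := (q ^ M)%C).
  assert (Hn : (q ^ n = p * u)%C) by (unfold n, p, u; apply Cpow_add_r).
  assert (Hk : (q ^ k = p * p * u)%C) by (unfold k, p, u; rewrite !Cpow_add_r; ring).
  rewrite (qpS z (S n)), (qpS q (S M)), (qpS A (S k)), (qpS q n), (qpS q M).
  rewrite !Cpow_S, Hn, Hk. fold u.
  assert (HQM : qp q q M <> RtoC 0) by (apply qpq_nz; auto).
  assert (HR1 : qp A q (S k) <> RtoC 0) by auto.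
  assert (H1 : (1 - q * u)%C <> RtoC 0) by (unfold u; apply qqS).
  assert (H2 : (1 - q * (q * u))%C <> RtoC 0) by (replace (q * (q * u))%C with (q * q ^ (S M))%C by (unfold u; rewrite Cpow_S; ring); apply qqS).
  assert (H3 : (1 - A * (q * (p * p * u)))%C <> RtoC 0) by (rewrite <- Hk; rewrite <- Cpow_S; apply AqS).
  assert (H4 : (1 - A * p)%C <> RtoC 0) by apply AqS.
  assert (H5 : (1 - w * p)%C <> RtoC 0) by apply WqS.
  pose proof w1 as H6.
  unfold lamA, rhoA. fold p.
  set (Zs := qp z q (S n)). set (Qn := qp q q n). set (Ws := (w ^ S n)%C). set (QM := qp q q M). set (R1 := qp A q (S k)).
  field. repeat split; auto.
  - intro E. apply H5. replace (1 - q * a / z * p)%C with ((z - q * a * p) / z)%C by (field; auto). rewrite E. unfold Cdiv; ring.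
  - intro E. apply H6. replace (q * a / z - 1)%C with ((q * a - z) / z)%C by (field; auto). rewrite E. unfold Cdiv; ring.
Qed.

Lemma Z0 j : (0 < j)%nat -> (- rhoA j * tA j 0 = lamA j * (tA j 1 * (1 - q ^ 1)))%C.
Proof.
  intros Hj. destruct j as [|j']; [lia|]. unfold tA, cA.
  replace (S j' + 0)%nat with (S j') by lia. replace (S j' + S j' + 0)%nat with (S j' + S j')%nat by lia.
  replace (S j' + 1)%nat with (S (S j')) by lia. replace (S j' + S j' + 1)%nat with (S (S j' + S j')) by lia.
  simpl pred.
  set (p := (q ^ S j')%C). set (k := (S j' + S j')%nat).
  assert (Hk : (q ^ k = p * p)%C) by (unfold k, p; apply Cpow_add_r).
  rewrite (qpS z (S j')), (qpS A k), (qpS q j').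
  replace (q * q ^ j')%C with p by (unfold p; rewrite Cpow_S; auto).
  rewrite Hk. simpl (qp q q 1). change (qp q q 0) with (RtoC 1). rewrite (Cpow_S w (S j')). simpl (q ^ 1)%C.
  assert (HR : qp A q k <> RtoC 0) by auto.
  assert (H1 : (1 - q * 1)%C <> RtoC 0) by (replace (q * 1)%C with (q ^ 1)%C by (simpl; ring); apply pow_ne1; auto).
  assert (H3 : (1 - A * (p * p))%C <> RtoC 0) by (rewrite <- Hk; apply AqS).
  assert (H4 : (1 - A * p)%C <> RtoC 0) by apply AqS.
  assert (H5 : (1 - w * p)%C <> RtoC 0) by apply WqS.
  assert (HQ : qp q q j' <> RtoC 0) by (apply qpq_nz; auto).
  pose proof w1 as H6.
  unfold lamA, rhoA. fold p.
  field. repeat split; auto.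
  - replace (1 - q)%C with (1 - q * 1)%C by ring. auto.
  - intro E. apply H5. replace (1 - q * a / z * p)%C with ((z - q * a * p) / z)%C by (field; auto). rewrite E. unfold Cdiv; ring.
  - intro E. apply H6. replace (q * a / z - 1)%C with ((q * a - z) / z)%C by (field; auto). rewrite E. unfold Cdiv; ring.
Qed.

Lemma Zsum j M : (0 < j)%nat ->
  (ps (tA (S j)) M - rhoA j * ps (tA j) (S M) = lamA j * (tA j (S M) * (1 - q ^ (S M))))%C.
Proof.
  intros Hj. induction M.
  - simpl. rewrite <- Z0 by auto. ring.
  - change (ps (tA (S j)) (S M)) with (ps (tA (S j)) M + tA (S j) M)%C.
    change (ps (tA j) (S (S M))) with (ps (tA j) (S M) + tA j (S M))%C.
    pose proof (Z1 j M Hj). 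
    replace (ps (tA (S j)) M + tA (S j) M - rhoA j * (ps (tA j) (S M) + tA j (S M)))%C
      with ((ps (tA (S j)) M - rhoA j * ps (tA j) (S M)) + (tA (S j) M - rhoA j * tA j (S M)))%C by ring.
    rewrite IHM, H. ring.
Qed.

Lemma dstep j : (0 < j)%nat -> (rhoA j * dA j = dA (S j))%C.
Proof.
  intros Hj. destruct j as [|j']; [lia|]. unfold dA, rhoA. simpl pred.
  rewrite (qpS z (S j')), (qpS q j'), (qpS A (S j')), (qpS w (S j')).
  replace (q * q ^ j')%C with (q ^ S j')%C by (rewrite Cpow_S; auto).
  rewrite (Cpow_S w (S j')).
  assert (H4 : (1 - A * q ^ S j')%C <> RtoC 0) by apply AqS.
  assert (H5 : (1 - w * q ^ S j')%C <> RtoC 0) by apply WqS.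
  assert (HQ : qp A q (S j') <> RtoC 0) by auto.
  assert (HQ' : qp w q (S j') <> RtoC 0) by auto.
  field. repeat split; auto. apply zAp; auto.
Qed.

Lemma cA_bound : exists C0, 0 < C0 /\ forall n, Cmod (cA n) <= C0 * Cmod w ^ n.
Proof.
  destruct (qp_upper q Hq z) as [Kz [HKz HKz']].
  destruct (qp_upper q Hq q) as [Kq [HKq HKq']].
  exists (Kz * Kq). split. nra. intros n. unfold cA. rewrite !Cmod_mult, Cmod_pow.
  apply Rmult_le_compat_r. apply pow_le, Cmod_ge_0.
  apply Rmult_le_compat; auto; apply Cmod_ge_0.
Qed.

Lemma tA_bound : exists Ct, 0 < Ct /\ forall j m, Cmod (tA j m) <= Ct * Cmod w ^ (j + m).
Proof.
  destruct cA_bound as [C0 [HC0 HC0']].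
  destruct (qp_lower q Hq q (qpq_nz q Hq)) as [dq [Hdq Hdq']].
  destruct (qp_lower q Hq A HA) as [dA0 [HdA HdA']].
  exists (C0 / (dq * dA0)). split. apply Rdiv_lt_0_compat; nra.
  intros j m. unfold tA. unfold Cdiv at 1. rewrite Cmod_mult, Cmod_inv.
  2:{ apply Cmult_neq0; auto. apply qpq_nz; auto. }
  rewrite Cmod_mult.
  pose proof (Hdq' m). pose proof (HdA' (j + j + m)%nat).
  assert (dq * dA0 <= Cmod (qp q q m) * Cmod (qp A q (j + j + m))) by (apply Rmult_le_compat; lra).
  pose proof (Rinv_le_contravar _ _ (Rmult_lt_0_compat _ _ Hdq HdA) H1).
  replace (C0 / (dq * dA0) * Cmod w ^ (j + m)) with (C0 * Cmod w ^ (j + m) * / (dq * dA0)) by (unfold Rdiv; ring).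
  apply Rmult_le_compat; auto. apply Cmod_ge_0. apply Rlt_le, Rinv_0_lt_compat.
  apply Rlt_le_trans with (dq * dA0); nra.
Qed.

Lemma Cmod_w' : 0 <= Cmod w < 1.
Proof. split. apply Cmod_ge_0. exact Hw. Qed.

Lemma D1 : cv (ps (tA 1)) (dA 1).
Proof.
  set (tau := fun m => (qp z q (S m) * w ^ (S m) / qp A q (S m))%C).
  assert (Htel : forall m, (tau m - tau (S m) = (1 - w) * tA 1 m)%C).
  { intros m. unfold tau, tA, cA. replace (1 + m)%nat with (S m) by lia. replace (1 + 1 + m)%nat with (S (S m)) by lia.
    simpl pred. rewrite (qpS z (S m)), (qpS A (S m)), (Cpow_S w (S m)).
    assert (H4 : (1 - A * q ^ S m)%C <> RtoC 0) by apply AqS.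
    assert (HQ : qp A q (S m) <> RtoC 0) by auto.
    assert (HQ' : qp q q m <> RtoC 0) by (apply qpq_nz; auto).
    field. repeat split; auto. }
  assert (Hw1 : (1 - w)%C <> RtoC 0). { intro E. apply w1. replace (w - 1)%C with (- (1 - w))%C by ring. rewrite E. ring. }
  apply (cv_ext (fun M => / (1 - w) * (tau O - tau M))%C).
  { intros M. rewrite <- ps_tel. rewrite <- ps_scal. apply ps_ext. intros. rewrite Htel. field. split; [auto|apply zA]. }
  replace (dA 1) with (/ (1 - w) * (tau O - 0))%C.
  2:{ unfold dA, tau. simpl. field. repeat split; auto using zA.
      replace (1 - A)%C with (1 - A * q ^ 0)%C by (simpl; ring). apply AqS. }
  apply cv_scal. apply cv_minus. apply cv_const.
  destruct (qp_upper q Hq z) as [Kz [HKz HKz']].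
  destruct (qp_lower q Hq A HA) as [dA0 [HdA HdA']].
  apply (cv_bound0 _ (Kz / dA0) (Cmod w)). apply Cmod_w'.
  intros M. unfold tau. unfold Cdiv at 1. rewrite Cmod_mult, Cmod_inv by auto. rewrite Cmod_mult, Cmod_pow.
  pose proof Cmod_w'. pose proof (Rinv_le_contravar _ _ HdA (HdA' (S M))).
  assert (Cmod w ^ S M <= Cmod w ^ M). { simpl. pose proof (pow_le (Cmod w) M ltac:(lra)). nra. }
  replace (Kz / dA0 * Cmod w ^ M) with (Kz * Cmod w ^ M * / dA0) by (unfold Rdiv; ring).
  apply Rmult_le_compat; auto. apply Rmult_le_pos; [apply Cmod_ge_0| apply pow_le, Cmod_ge_0].
  apply Rlt_le, Rinv_0_lt_compat. apply Rlt_le_trans with dA0; auto.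
  apply Rmult_le_compat; auto. apply Cmod_ge_0. apply pow_le, Cmod_ge_0.
Qed.

Lemma D_lim j : (0 < j)%nat -> cv (ps (tA j)) (dA j).
Proof.
  intros Hj. induction j as [|j IH]. lia. destruct j as [|j]. apply D1.
  specialize (IH ltac:(lia)).
  destruct tA_bound as [Ct [HCt HCt']].
  pose proof Cmod_w' as Hw'.
  apply (cv_ext (fun M => rhoA (S j) * ps (tA (S j)) (S M) + lamA (S j) * (tA (S j) (S M) * (1 - q ^ (S M))))%C).
  { intros M. rewrite <- Zsum by lia. ring. }
  rewrite <- dstep by lia. replace (rhoA (S j) * dA (S j))%C with (rhoA (S j) * dA (S j) + lamA (S j) * 0)%C by ring.
  apply cv_plus. apply cv_scal. apply (cv_shift (ps (tA (S j)))). auto.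
  apply cv_scal. apply (cv_bound0 _ (Ct * 2) (Cmod w)); auto.
  intros M. rewrite Cmod_mult. 
  pose proof (Cmod_1_add (q ^ S M)). rewrite Cmod_pow in H.
  pose proof (pow_le1 (Cmod q) (S M) ltac:(pose proof (Hq0 q Hq); lra)).
  pose proof (HCt' (S j) (S M)).
  assert (Cmod w ^ (S j + S M) <= Cmod w ^ M) by (apply pow_anti; [lra|lia]).
  pose proof (pow_le (Cmod w) (S j + S M) ltac:(lra)).
  apply Rle_trans with ((Ct * Cmod w ^ (S j + S M)) * 2).
  apply Rmult_le_compat; auto; try apply Cmod_ge_0; lra.
  nra.
Qed.

Lemma ps_const_after f M0 M : (forall m, (M0 <= m)%nat -> f m = RtoC 0) -> (M0 <= M)%nat -> ps f M = ps f M0.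
Proof. intros H HM. induction M. replace M0 with O by lia. auto.
  destruct (Nat.eq_dec M0 (S M)). subst; auto. simpl. rewrite IHM by lia. rewrite H by lia. ring. Qed.

Lemma tail_bound : exists Cb, 0 < Cb /\ forall j M, (0 < j)%nat -> Cmod (ps (tA j) M - dA j) <= Cb * Cmod w ^ (j + M).
Proof.
  destruct tA_bound as [Ct [HCt HCt']].
  pose proof Cmod_w' as Hw'.
  exists (Ct / (1 - Cmod w)). split. apply Rdiv_lt_0_compat; lra.
  intros j M Hj. rewrite Cmod_sub_sym.
  apply (cv_le_ev (ps (tA j)) (dA j) (ps (tA j) M) _ M (D_lim j Hj)).
  intros n Hn. replace n with (M + (n - M))%nat by lia. rewrite ps_split.
  replace (ps (tA j) M + ps (fun i => tA j (M + i)) (n - M) - ps (tA j) M)%C with (ps (fun i => tA j (M + i)) (n - M)) by ring.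
  eapply Rle_trans. apply ps_cmod.
  eapply Rle_trans. apply (rps_le _ (fun i => Ct * Cmod w ^ (j + M) * Cmod w ^ i)).
  { intros i _. rewrite Rmult_assoc, <- pow_add. replace (j + M + i)%nat with (j + (M + i))%nat by lia. apply HCt'. }
  rewrite rps_scal. pose proof (rps_geom_le (Cmod w) (n - M) Hw').
  replace (Ct / (1 - Cmod w) * Cmod w ^ (j + M)) with (Ct * Cmod w ^ (j + M) * (1 / (1 - Cmod w))) by (field; lra).
  apply Rmult_le_compat_l; auto. apply Rmult_le_pos. lra. apply pow_le; lra.
Qed.

Definition EA N := ps (fun i => alpha (S i) * (ps (tA (S i)) (N - i) - dA (S i)))%C N.

Lemma EA_eq N : (ps T1s N - ps T2s N = ps F2s N + EA N)%C.
Proof.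
  rewrite FI. unfold RA, EA.
  rewrite (ps_ext T2s (fun i => alpha (S i) * dA (S i))%C).
  2:{ intros k _. unfold T2s, dA. simpl pred. ring. }
  rewrite (ps_ext (fun i => alpha (S i) * (ps (tA (S i)) (N - i) - dA (S i)))%C
                  (fun i => alpha (S i) * ps (tA (S i)) (N - i) - alpha (S i) * dA (S i))%C) by (intros; ring).
  rewrite ps_minus. ring.
Qed.

Lemma EA_term (Habs : exists l, Un_cv (sum_f_R0 (fun k => Cmod (T2s k))) l) : cv EA (RtoC 0).
Proof.
  destruct (classic (exists m0, qp z q m0 = RtoC 0)) as [[m0 Hm0]|Hnt].
  - assert (Hz0 : forall n, (m0 <= n)%nat -> qp z q n = RtoC 0).
    { intros n Hn. replace n with (m0 + (n - m0))%nat by lia. rewrite qp_add, Hm0. ring. }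
    assert (Ht0 : forall j m, (m0 <= j + m)%nat -> tA j m = RtoC 0).
    { intros j m Hjm. unfold tA, cA. rewrite Hz0 by auto. unfold Cdiv. ring. }
    apply (cv_ext_ev (fun _ => RtoC 0) _ _ m0). 2: apply cv_const.
    intros N HN. unfold EA. rewrite <- (ps_zero N). symmetry. apply ps_ext. intros i Hi.
    assert (E : dA (S i) = ps (tA (S i)) (N - i)).
    { apply (cv_unique (ps (tA (S i)))). apply D_lim; lia.
      apply (cv_ext_ev (fun _ => ps (tA (S i)) (N - i)) _ _ (N - i)). 2: apply cv_const.
      intros M HM. symmetry. apply ps_const_after; auto. intros m Hm. apply Ht0. lia. }
    rewrite E. ring.
  - assert (Hnz : forall n, qp z q n <> RtoC 0). { intros n E. apply Hnt. exists n. auto. }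
    destruct (qp_lower q Hq z Hnz) as [dz [Hdz Hdz']].
    destruct (qp_lower q Hq q (qpq_nz q Hq)) as [dq [Hdq Hdq']].
    destruct (qp_upper q Hq A) as [KA [HKA HKA']].
    destruct (qp_upper q Hq w) as [KW [HKW HKW']].
    destruct tail_bound as [Cb [HCb HCb']].
    pose proof Cmod_w' as Hw'.
    set (g := dz * dq / (KA * KW)).
    assert (Hg : 0 < g) by (unfold g; apply Rdiv_lt_0_compat; nra).
    assert (Hd : forall n, g * Cmod w ^ n <= Cmod (dA n)).
    { intros n.
      assert (E : dA n = ((qp z q n * qp q q (pred n) * w ^ n) * / (qp A q n * qp w q n))%C) by (unfold dA, Cdiv; ring).
      rewrite E, Cmod_mult, Cmod_inv by (apply Cmult_neq0; auto). rewrite !Cmod_mult, Cmod_pow. pose proof (Hdz' n). pose proof (Hdq' (pred n)). pose proof (HKA' n). pose proof (HKW' n).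
      assert (0 < Cmod (qp A q n)) by (apply Cmod_gt_0; auto).
      assert (0 < Cmod (qp w q n)) by (apply Cmod_gt_0; auto).
      replace (Cmod (qp z q n) * Cmod (qp q q (Init.Nat.pred n)) * Cmod w ^ n * / (Cmod (qp A q n) * Cmod (qp w q n)))
        with (Cmod (qp z q n) * Cmod (qp q q (Init.Nat.pred n)) * / (Cmod (qp A q n) * Cmod (qp w q n)) * Cmod w ^ n) by ring.
      apply Rmult_le_compat_r. apply pow_le; lra. unfold g. unfold Rdiv.
      apply Rmult_le_compat. nra. apply Rlt_le, Rinv_0_lt_compat; nra.
      apply Rmult_le_compat; lra.
      apply Rinv_le_contravar. nra. apply Rmult_le_compat; lra. }
    destruct Habs as [l Hl].
    intros eps He.
    destruct (conv_to0 (fun k => Cmod (T2s k)) l (Cmod w) (fun k => Cmod_ge_0 _) Hl Hw' (eps * g / Cb)) as [N0 HN0].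
    { apply Rdiv_lt_0_compat; nra. }
    exists N0. intros N HN. replace (EA N - 0)%C with (EA N) by ring. unfold EA.
    eapply Rle_lt_trans. apply ps_cmod.
    eapply Rle_lt_trans. apply (rps_le _ (fun i => Cb / g * (Cmod (T2s i) * Cmod w ^ (N - i)))).
    + intros i Hi. rewrite Cmod_mult.
      assert (HT : Cmod (T2s i) = Cmod (alpha (S i)) * Cmod (dA (S i))).
      { rewrite <- Cmod_mult. f_equal. unfold T2s, dA. simpl pred. ring. }
      rewrite HT. pose proof (HCb' (S i) (N - i)%nat ltac:(lia)).
      pose proof (Hd (S i)). pose proof (Cmod_ge_0 (alpha (S i))).
      replace (S i + (N - i))%nat with (S i + (N - i))%nat in H by lia. rewrite pow_add in H.
      pose proof (pow_le (Cmod w) (S i) ltac:(lra)). pose proof (pow_le (Cmod w) (N - i) ltac:(lra)).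
      apply Rle_trans with (Cmod (alpha (S i)) * (Cb * (Cmod w ^ S i * Cmod w ^ (N - i)))).
      apply Rmult_le_compat_l; auto.
      replace (Cb / g * (Cmod (alpha (S i)) * Cmod (dA (S i)) * Cmod w ^ (N - i)))
        with (Cb * Cmod w ^ (N - i) * (Cmod (alpha (S i)) * Cmod (dA (S i))) / g) by (field; lra).
      replace (Cmod (alpha (S i)) * (Cb * (Cmod w ^ S i * Cmod w ^ (N - i))))
        with (Cb * Cmod w ^ (N - i) * (Cmod (alpha (S i)) * (g * Cmod w ^ S i)) / g) by (field; lra).
      unfold Rdiv. apply Rmult_le_compat_r. apply Rlt_le, Rinv_0_lt_compat; auto.
      apply Rmult_le_compat_l. nra. apply Rmult_le_compat_l; auto.
    + rewrite rps_scal. specialize (HN0 N HN).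
      replace eps with (Cb / g * (eps * g / Cb)) by (field; lra).
      apply Rmult_lt_compat_l. apply Rdiv_lt_0_compat; auto. auto.
Qed.

Theorem partA s1 s2 f2 : (exists l, Un_cv (sum_f_R0 (fun k => Cmod (T2s k))) l) ->
  cv (ps T1s) s1 -> cv (ps T2s) s2 -> cv (ps F2s) f2 -> (s1 - s2)%C = f2.
Proof.
  intros Habs H1 H2 H3.
  pose proof (cv_minus _ _ _ _ H1 H2) as H12.
  pose proof (cv_plus _ _ _ _ H3 (EA_term Habs)) as H4.
  replace (f2 + 0)%C with f2 in H4 by ring.
  apply (cv_unique _ _ _ H12). eapply cv_ext. 2: apply H4. intros. simpl. rewrite EA_eq. auto.
Qed.

End PartA.

Definition tri n := (n * (n - 1) / 2)%nat.
Lemma tri_S k : tri (S k) = (tri k + k)%nat.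
Proof. unfold tri. replace (S k * (S k - 1))%nat with (k * (k - 1) + k * 2)%nat.
  rewrite Nat.div_add by lia. auto. destruct k. simpl. auto. simpl. rewrite Nat.sub_0_r. nia. Qed.
Lemma tri_F k : ((S k * (S k + 1)) / 2)%nat = (tri (S k) + S k)%nat.
Proof. rewrite <- tri_S. unfold tri. f_equal. simpl. nia. Qed.

Section PartC.
Variables q a : C.
Hypothesis Hq : Cmod q < 1.
Hypothesis HA : forall n, qp (q * a) q n <> RtoC 0.
Hypothesis Ha1 : (1 - a)%C <> RtoC 0.

Local Notation A := (q * a)%C.

Definition ua n := ((1 - a * q ^ (n + n)) * qp a q n * (- (1)) ^ n * q ^ (tri n) / ((1 - a) * qp q q n))%C.

Lemma ua0 : ua O = RtoC 1.
Proof. unfold ua. simpl. field. exact Ha1. Qed.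

Lemma qpa_shift k : qp a q (S k) = ((1 - a) * qp A q k)%C.
Proof. rewrite qp_shift. replace (a * q)%C with A by ring. auto. Qed.

Definition Uk n k := ((- (1)) ^ k * q ^ (tri k + k) * qp A q k * (1 - q ^ (n - k))
   / (qp q q k * qp q q (n - k) * qp A q (n + k) * (1 - q ^ n)))%C.

Lemma unit_partial n k : (0 < n)%nat -> (k <= n)%nat ->
  ps (fun j => ua j / (qp q q (n - j) * qp A q (n + j)))%C (S k) = Uk n k.
Proof.
  intros Hn Hk. induction k.
  - simpl. unfold Uk. rewrite ua0. rewrite !Nat.sub_0_r, Nat.add_0_r. simpl.
    assert (qp q q n <> RtoC 0) by (apply qpq_nz; auto).
    assert ((1 - q ^ n)%C <> RtoC 0) by (apply pow_ne1; auto).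
    field. repeat split; auto.
  - change (ps ?f (S (S k))) with (ps f (S k) + f (S k))%C. rewrite IHk by lia.
    set (r := (n - S k)%nat).
    assert (En : n = (S k + r)%nat) by (unfold r; lia). clearbody r. subst n.
    unfold Uk, ua.
    replace (S k + r - k)%nat with (S r) by lia. replace (S k + r - S k)%nat with r by lia.
    rewrite tri_S. replace (tri k + k + S k)%nat with (tri k + k + k + 1)%nat by lia.
    replace (S k + r + S k)%nat with (S (S k + r + k)) by lia.
    rewrite (qpS q A (S k + r + k)).
    rewrite qpa_shift, (qpS q A k), (qpS q q k), (qpS q q r).
    set (p := (q ^ k)%C). set (u := (q ^ r)%C). set (T := (q ^ tri k)%C).
    assert (E1 : (q ^ (S k + r + k) = q * p * p * u)%C) by (unfold p, u; rewrite !Cpow_add_r; simpl; ring).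
    assert (E2 : (q ^ (tri k + k + k + 1) = T * p * p * q)%C) by (unfold T, p; rewrite !Cpow_add_r; simpl; ring).
    assert (E3 : (q ^ (tri k + k) = T * p)%C) by (unfold T, p; rewrite !Cpow_add_r; ring).
    assert (E4 : (q ^ (S k + r) = q * p * u)%C) by (unfold p, u; rewrite !Cpow_add_r; simpl; ring).
    assert (E5 : (q ^ (S r) = q * u)%C) by (unfold u; simpl; ring).
    assert (E6 : (q ^ (S k + S k) = q * q * p * p)%C) by (unfold p; rewrite !Cpow_add_r; simpl; ring).
    rewrite E1, E2, E3, E4, E5, E6. rewrite Cpow_S.
    set (s := ((- (1)) ^ k)%C). set (L := qp A q k). set (Y := qp q q k). set (Zr := qp q q r). set (V := qp A q (S k + r + k)).
    assert (HY : Y <> RtoC 0) by (apply qpq_nz; auto).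
    assert (HZ : Zr <> RtoC 0) by (apply qpq_nz; auto).
    assert (HV : V <> RtoC 0) by (unfold V; apply HA).
    assert (H1 : (1 - q * u)%C <> RtoC 0) by (rewrite <- E5; apply pow_ne1; auto; lia).
    assert (H2 : (1 - q * p * u)%C <> RtoC 0) by (rewrite <- E4; apply pow_ne1; auto; lia).
    assert (H3 : (1 - q * p)%C <> RtoC 0) by (replace (q * p)%C with (q ^ S k)%C by (unfold p; simpl; ring); apply pow_ne1; auto; lia).
    assert (H4 : (1 - A * (q * p * p * u))%C <> RtoC 0) by (rewrite <- E1; apply qp_S_nz; auto).
    field. repeat split; auto.
Qed.

Lemma unit_bailey n : (0 < n)%nat ->
  ps (fun j => ua j / (qp q q (n - j) * qp A q (n + j)))%C (S n) = RtoC 0.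
Proof. intros Hn. rewrite unit_partial by auto. unfold Uk. rewrite Nat.sub_diag. simpl. unfold Cdiv. ring. Qed.

Variables sa z : C.
Hypothesis Hsa : (sa * sa)%C = a.
Hypothesis Hz : z <> RtoC 0.
Hypothesis HW : forall n, qp (q * a / z) q n <> RtoC 0.
Hypothesis Hs3 : forall n, qp sa q n <> RtoC 0.
Hypothesis Hs4 : forall n, qp (- sa) q n <> RtoC 0.

Lemma sa_prod n : (qp (q * sa) q n * qp (- (q * sa)) q n * (1 - a) = (1 - a * q ^ (n + n)) * qp sa q n * qp (- sa) q n)%C.
Proof.
  induction n. simpl. ring.
  simpl qp.
  transitivity ((qp (q * sa) q n * qp (- (q * sa)) q n * (1 - a)) * ((1 - q * sa * q ^ n) * (1 + q * sa * q ^ n)))%C. ring.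
  rewrite IHn. rewrite <- Hsa. replace (S n + S n)%nat with (S (S (n + n))) by lia. rewrite !Cpow_S, !Cpow_add_r. ring.
Qed.

Definition F1s k := (qp (q * sa) q (S k) * qp (- (q * sa)) q (S k) * qp a q (S k) * qp z q (S k)
        * q ^ ((S k * (S k + 1)) / 2)
        / (qp sa q (S k) * qp (- sa) q (S k) * qp A q (S k)
             * qp (q * a / z) q (S k) * (1 - q ^ (S k)))
        * (- a / z) ^ (S k))%C.

Lemma T2u_F1 k : (qp z q (S k) * qp q q k / (qp A q (S k) * qp (q * a / z) q (S k)) * (q * a / z) ^ (S k) * ua (S k))%C = F1s k.
Proof.
  unfold F1s, ua. rewrite tri_F.
  set (n := S k).
  assert (HP : (qp (q * sa) q n * qp (- (q * sa)) q n = (1 - a * q ^ (n + n)) * qp sa q n * qp (- sa) q n / (1 - a))%C).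
  { rewrite <- sa_prod. field. auto. }
  rewrite HP. unfold n. rewrite (qpS q q k). replace (q * q ^ k)%C with (q ^ S k)%C by (rewrite Cpow_S; auto).
  replace (q * a / z)%C with (q * (a / z))%C at 2 by (field; auto).
  replace (- a / z)%C with (- (1) * (a / z))%C by (field; auto).
  rewrite !Cpow_mult_l.
  fold n. rewrite (Cpow_add_r q (tri n) n), (Cpow_add_r q n n).
  assert (H1 : qp sa q n <> RtoC 0) by auto.
  assert (H2 : qp (- sa) q n <> RtoC 0) by auto.
  assert (H3 : qp A q n <> RtoC 0) by auto.
  assert (H4 : qp (q * a / z) q n <> RtoC 0) by auto.
  assert (H5 : (1 - q ^ n)%C <> RtoC 0) by (apply pow_ne1; auto; unfold n; lia).
  assert (H6 : qp q q k <> RtoC 0) by (apply qpq_nz; auto).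
  field. repeat split; auto.
Qed.

End PartC.

Theorem mainC (q a z sa : C) (alpha beta : nat -> C) (s1 s2 f1 f2 f3 f4 : C) :
  Cmod q < 1 -> z <> RtoC 0 -> Cmod (q * a / z) < 1 -> (sa * sa)%C = a ->
  (forall n, qp (q * a) q n <> RtoC 0) -> (forall n, qp (q * a / z) q n <> RtoC 0) ->
  (forall n, qp sa q n <> RtoC 0) -> (forall n, qp (- sa) q n <> RtoC 0) ->
  alpha O = RtoC 1 ->
  (forall n, (0 < n)%nat -> beta n = ps (fun j => alpha j / (qp q q (n - j) * qp (q * a) q (n + j)))%C (S n)) ->
  (exists l, Un_cv (sum_f_R0 (fun k => Cmod (T2s q a z alpha k))) l) ->
  (exists l, Un_cv (sum_f_R0 (fun k => Cmod (F1s q a sa z k))) l) ->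
  cv (ps (T1s q a z beta)) s1 -> cv (ps (T2s q a z alpha)) s2 -> cv (ps (F1s q a sa z)) f1 ->
  cv (ps (F2s q a z)) f2 ->
  cv (ps (fun k => a * q ^ (S k) / z / (1 - a * q ^ (S k) / z)))%C f3 ->
  cv (ps (fun k => a * q ^ (S k) / (1 - a * q ^ (S k))))%C f4 ->
  (s1 - s2)%C = f2 /\ f2 = (- f1)%C /\ f2 = (f3 - f4)%C.
Proof.
  intros Hq Hz Hw Hsa HA HW Hs3 Hs4 Hb0 Hbn Habs2 Habs1 H1 H2 H3 H4 H5 H6.
  split; [|split].
  - apply (partA q a z alpha beta); auto.
  - assert (Ha1 : (1 - a)%C <> RtoC 0).
    { replace (1 - a)%C with (qp sa q 1 * qp (- sa) q 1)%C by (rewrite <- Hsa; simpl; ring).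
      apply Cmult_neq0; auto. }
    set (bu := fun n : nat => match n with O => RtoC 1 | S _ => RtoC 0 end).
    assert (E : (RtoC 0 - f1)%C = f2).
    { apply (partA q a z (ua q a) bu Hq Hz Hw HA HW (ua0 q a Ha1)).
      - intros n Hn. destruct n. lia. simpl bu. symmetry. apply unit_bailey; auto.
      - destruct Habs1 as [l Hl]. exists l.
        replace (fun k => Cmod (T2s q a z (ua q a) k)) with (fun k => Cmod (F1s q a sa z k)); auto.
        apply functional_extensionality. intros k. f_equal. symmetry. apply T2u_F1; auto.
      - apply (cv_ext (fun _ => RtoC 0)). 2: apply cv_const. intros N.
        rewrite <- (ps_zero N). apply ps_ext. intros. unfold T1s, bu. ring.
      - eapply cv_ext. 2: apply H3. intros N. apply ps_ext. intros k _. symmetry. apply T2u_F1; auto.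
      - auto. }
    rewrite <- E. ring.
  - apply (partB q a z Hq Hz Hw HA HW); auto.
Qed.

Require Import Defs.

Definition toC (x : Cplx) : Complex.C := (Defs.Re x, Defs.Im x).

Lemma toC_inj x y : toC x = toC y -> x = y.
Proof. destruct x, y. unfold toC. simpl. intros H. inversion H. auto. Qed.
Lemma toC_add x y : toC (Cadd x y) = Complex.Cplus (toC x) (toC y).
Proof. reflexivity. Qed.
Lemma toC_mul x y : toC (Cmul x y) = Complex.Cmult (toC x) (toC y).
Proof. reflexivity. Qed.
Lemma toC_opp x : toC (Copp x) = Complex.Copp (toC x).
Proof. reflexivity. Qed.
Lemma toC_sub x y : toC (Csub x y) = Complex.Cminus (toC x) (toC y).
Proof. reflexivity. Qed.
Lemma toC_inv x : toC (Defs.Cinv x) = Complex.Cinv (toC x).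
Proof. unfold toC, Defs.Cinv, Complex.Cinv. simpl. f_equal; unfold Rdiv; f_equal; f_equal; ring. Qed.
Lemma toC_div x y : toC (Cdiv x y) = Complex.Cdiv (toC x) (toC y).
Proof. unfold Cdiv. rewrite toC_mul, toC_inv. reflexivity. Qed.
Lemma toC_one : toC Cone = Complex.RtoC 1.
Proof. reflexivity. Qed.
Lemma toC_zero : toC Czero = Complex.RtoC 0.
Proof. reflexivity. Qed.
Lemma toC_pow x n : toC (Defs.Cpow x n) = Complex.Cpow (toC x) n.
Proof. induction n; simpl. reflexivity. rewrite toC_mul, IHn. apply Cmult_comm. Qed.
Lemma toC_qpoch x q n : toC (qpoch x q n) = qp (toC x) (toC q) n.
Proof. induction n; simpl. reflexivity. rewrite toC_mul, toC_sub, toC_mul, toC_pow, IHn. reflexivity. Qed.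
Lemma toC_psum f N : toC (Cpsum f N) = ps (fun k => toC (f k)) N.
Proof. induction N; simpl. reflexivity. rewrite toC_add, IHN. reflexivity. Qed.
Lemma Cmod_toC x : Defs.Cmod x = Complex.Cmod (toC x).
Proof. unfold Defs.Cmod, Complex.Cmod, toC. simpl. f_equal. ring. Qed.
Lemma toC_nz x : x <> Czero -> toC x <> Complex.RtoC 0.
Proof. intros H E. apply H. apply toC_inj. rewrite E. reflexivity. Qed.

Lemma Cmod_le_abs (x y : R) : Complex.Cmod (x, y) <= Rabs x + Rabs y.
Proof.
  pose proof (Complex.Cmod_ge_0 (x, y)).
  assert (E : Complex.Cmod (x, y) ^ 2 = x ^ 2 + y ^ 2).
  { unfold Complex.Cmod. simpl fst. simpl snd. rewrite pow2_sqrt. auto.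
    pose proof (pow2_ge_0 x). pose proof (pow2_ge_0 y). lra. }
  pose proof (Rabs_pos x). pose proof (Rabs_pos y).
  assert (x ^ 2 = Rabs x ^ 2) by (unfold Rabs; destruct (Rcase_abs x); ring). assert (y ^ 2 = Rabs y ^ 2) by (unfold Rabs; destruct (Rcase_abs y); ring).
  nra.
Qed.

Lemma ser_cv f s : Cseries_sum f s -> cv (ps (fun k => toC (f k))) (toC s).
Proof.
  intros [Hre Him] eps He.
  destruct (Hre (eps / 2)) as [N1 HN1]. lra. destruct (Him (eps / 2)) as [N2 HN2]. lra.
  exists (max N1 N2). intros n Hn. pose proof (Nat.le_max_l N1 N2). pose proof (Nat.le_max_r N1 N2).
  specialize (HN1 n ltac:(lia)). specialize (HN2 n ltac:(lia)). unfold R_dist in *.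
  rewrite <- toC_psum. rewrite <- toC_sub. unfold toC at 1.
  eapply Rle_lt_trans. apply Cmod_le_abs.
  unfold Csub, Cadd, Copp in *. simpl. unfold Rminus in *. lra.
Qed.

Lemma abs_conv f : Cabs_conv f -> exists l, Un_cv (sum_f_R0 (fun k => Complex.Cmod (toC (f k)))) l.
Proof.
  intros [l Hl]. exists l. replace (fun k => Complex.Cmod (toC (f k))) with (fun n => Defs.Cmod (f n)); auto.
  apply functional_extensionality. intros. apply Cmod_toC.
Qed.

Lemma ps_ext_fun (f g : nat -> Complex.C) : (forall k, f k = g k) -> ps f = ps g.
Proof. intros H. apply functional_extensionality. intros N. apply ps_ext. auto. Qed.

Ltac tc := repeat first [ rewrite toC_mul | rewrite toC_div | rewrite toC_sub | rewrite toC_opp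
                        | rewrite toC_qpoch | rewrite toC_pow | rewrite toC_one | rewrite toC_zero | rewrite toC_add ].

Theorem theorem3p1
  (q a z sa : Cplx) (alpha beta : nat -> Cplx)
  (Hq : Cmod q < 1)
  (Hbp : bailey_pair a q alpha beta)
  (Haz : Cmod (q * a)%C < Cmod z)
  (Hsa : (sa * sa)%C = a)
  (* no denominator vanishes *)
  (Hz : z <> Czero)
  (Hd1 : forall n, qpoch (q * a)%C q n <> Czero)
  (Hd2 : forall n, qpoch (q * a / z)%C q n <> Czero)
  (Hd3 : forall n, qpoch sa q n <> Czero)
  (Hd4 : forall n, qpoch (- sa)%C q n <> Czero)
  (Hd5 : forall n, (0 < n)%nat -> (Cone - q ^ n)%C <> Czero)
  (Hd6 : forall n, (0 < n)%nat -> (Cone - a * q ^ n / z)%C <> Czero)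
  (Hd7 : forall n, (0 < n)%nat -> (Cone - a * q ^ n)%C <> Czero) :
  let T1 := fun k => let n := S k in
      (qpoch z q n * qpoch q q (n - 1) * (q * a / z) ^ n * beta n)%C in
  let T2 := fun k => let n := S k in
      (qpoch z q n * qpoch q q (n - 1)
        / (qpoch (q * a) q n * qpoch (q * a / z) q n)
        * (q * a / z) ^ n * alpha n)%C in
  let F1 := fun k => let n := S k in
      (qpoch (q * sa) q n * qpoch (- (q * sa)) q n * qpoch a q n * qpoch z q n
        * q ^ ((n * (n + 1)) / 2)
        / (qpoch sa q n * qpoch (- sa) q n * qpoch (q * a) q n
             * qpoch (q * a / z) q n * (Cone - q ^ n))
        * (- a / z) ^ n)%C in
  let F2 := fun k => let n := S k in
      (qpoch z q n / (qpoch (q * a) q n * (Cone - q ^ n)) * (q * a / z) ^ n)%C in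
  let F3 := fun k => let n := S k in
      (a * q ^ n / z / (Cone - a * q ^ n / z))%C in
  let F4 := fun k => let n := S k in
      (a * q ^ n / (Cone - a * q ^ n))%C in
  Cabs_conv T1 -> Cabs_conv T2 -> Cabs_conv F1 ->
  Cabs_conv F2 -> Cabs_conv F3 -> Cabs_conv F4 ->
  forall s1 s2 f1 f2 f3 f4 : Cplx,
  Cseries_sum T1 s1 -> Cseries_sum T2 s2 -> Cseries_sum F1 f1 ->
  Cseries_sum F2 f2 -> Cseries_sum F3 f3 -> Cseries_sum F4 f4 ->
  (s1 - s2)%C = f2 /\ f2 = (- f1)%C /\ f2 = (f3 - f4)%C.

Proof.
  intros T1 T2 F1 F2 F3 F4 HT1 HT2 HF1 HF2 HF3 HF4 s1 s2 f1 f2 f3 f4 H1 H2 H3 H4 H5 H6.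
  apply ser_cv in H1, H2, H3, H4, H5, H6.
  apply abs_conv in HT2, HF1.
  set (q' := toC q) in *. set (a' := toC a) in *. set (z' := toC z) in *. set (sa' := toC sa) in *.
  set (al := fun n => toC (alpha n)). set (be := fun n => toC (beta n)).
  assert (HQ : Complex.Cmod q' < 1) by (unfold q'; rewrite <- Cmod_toC; auto).
  assert (HZ : z' <> Complex.RtoC 0) by (apply toC_nz; auto).
  assert (HW : Complex.Cmod (Complex.Cdiv (Complex.Cmult q' a') z') < 1).
  { rewrite Cmod_toC, toC_mul in Haz. rewrite Cmod_toC in Haz. fold q' a' z' in Haz.
    unfold Complex.Cdiv. rewrite Complex.Cmod_mult, Complex.Cmod_inv by auto.
    apply Complex.Cmod_gt_0 in HZ. apply (Rmult_lt_reg_r (Complex.Cmod z')); auto.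
    rewrite Rmult_assoc, Rinv_l by lra. lra. }
  assert (HSA : Complex.Cmult sa' sa' = a') by (unfold sa', a'; rewrite <- toC_mul, Hsa; auto).
  assert (HA : forall n, qp (Complex.Cmult q' a') q' n <> Complex.RtoC 0).
  { intros n. unfold q', a'. rewrite <- toC_mul, <- toC_qpoch. apply toC_nz. auto. }
  assert (HWq : forall n, qp (Complex.Cdiv (Complex.Cmult q' a') z') q' n <> Complex.RtoC 0).
  { intros n. unfold q', a', z'. rewrite <- toC_mul, <- toC_div, <- toC_qpoch. apply toC_nz. auto. }
  assert (HS3 : forall n, qp sa' q' n <> Complex.RtoC 0).
  { intros n. unfold q', sa'. rewrite <- toC_qpoch. apply toC_nz. auto. }
  assert (HS4 : forall n, qp (Complex.Copp sa') q' n <> Complex.RtoC 0).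
  { intros n. unfold q', sa'. rewrite <- toC_opp, <- toC_qpoch. apply toC_nz. auto. }
  destruct Hbp as [Hb0 [_ Hbn]].
  assert (HB0 : al O = Complex.RtoC 1) by (unfold al; rewrite Hb0; auto).
  assert (HBN : forall n, (0 < n)%nat -> be n = ps (fun j => Complex.Cdiv (al j) (Complex.Cmult (qp q' q' (n - j)) (qp (Complex.Cmult q' a') q' (n + j)))) (S n)).
  { intros n Hn. unfold be. rewrite (Hbn n Hn). unfold Csum_0_n. rewrite toC_psum. apply ps_ext. intros j _.
    tc. fold q' a'. unfold al. f_equal. f_equal. f_equal. apply Complex.Cmult_comm. }
  assert (eT1 : forall k, toC (T1 k) = T1s q' a' z' be k).
  { intros k. unfold T1, T1s. tc. replace (S k - 1)%nat with k by lia. reflexivity. }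
  assert (eT2 : forall k, toC (T2 k) = T2s q' a' z' al k).
  { intros k. unfold T2, T2s. tc. replace (S k - 1)%nat with k by lia. reflexivity. }
  assert (eF1 : forall k, toC (F1 k) = F1s q' a' sa' z' k).
  { intros k. unfold F1, F1s. tc. reflexivity. }
  assert (eF2 : forall k, toC (F2 k) = F2s q' a' z' k).
  { intros k. unfold F2, F2s. tc. reflexivity. }
  assert (eF3 : forall k, toC (F3 k) = Complex.Cdiv (Complex.Cdiv (Complex.Cmult a' (Complex.Cpow q' (S k))) z') (Complex.Cminus (Complex.RtoC 1) (Complex.Cdiv (Complex.Cmult a' (Complex.Cpow q' (S k))) z'))).
  { intros k. unfold F3. tc. reflexivity. }
  assert (eF4 : forall k, toC (F4 k) = Complex.Cdiv (Complex.Cmult a' (Complex.Cpow q' (S k))) (Complex.Cminus (Complex.RtoC 1) (Complex.Cmult a' (Complex.Cpow q' (S k))))).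
  { intros k. unfold F4. tc. reflexivity. }
  assert (X1 : cv (ps (T1s q' a' z' be)) (toC s1)) by (eapply cv_ext; [|apply H1]; intros; apply ps_ext; intros; auto).
  assert (X2 : cv (ps (T2s q' a' z' al)) (toC s2)) by (eapply cv_ext; [|apply H2]; intros; apply ps_ext; intros; auto).
  assert (X3 : cv (ps (F1s q' a' sa' z')) (toC f1)) by (eapply cv_ext; [|apply H3]; intros; apply ps_ext; intros; auto).
  assert (X4 : cv (ps (F2s q' a' z')) (toC f2)) by (eapply cv_ext; [|apply H4]; intros; apply ps_ext; intros; auto).
  assert (X5 := H5). assert (X6 := H6).
  rewrite (ps_ext_fun _ _ eF3) in X5. rewrite (ps_ext_fun _ _ eF4) in X6.
  assert (A2 : exists l, Un_cv (sum_f_R0 (fun k => Complex.Cmod (T2s q' a' z' al k))) l).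
  { destruct HT2 as [l Hl]. exists l. replace (fun k => Complex.Cmod (T2s q' a' z' al k)) with (fun k => Complex.Cmod (toC (T2 k))); auto.
    apply functional_extensionality. intros. rewrite eT2. auto. }
  assert (A1 : exists l, Un_cv (sum_f_R0 (fun k => Complex.Cmod (F1s q' a' sa' z' k))) l).
  { destruct HF1 as [l Hl]. exists l. replace (fun k => Complex.Cmod (F1s q' a' sa' z' k)) with (fun k => Complex.Cmod (toC (F1 k))); auto.
    apply functional_extensionality. intros. rewrite eF1. auto. }
  destruct (mainC q' a' z' sa' al be (toC s1) (toC s2) (toC f1) (toC f2) (toC f3) (toC f4) HQ HZ HW HSA HA HWq HS3 HS4 HB0 HBN A2 A1 X1 X2 X3 X4 X5 X6) as [E1 [E2 E3]].
  split; [|split]; apply toC_inj; tc; auto.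
Qed.
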